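(* Suppose $\widehat Z^\natural$ satisfies the average case incoherence condition with parameter $\mu_0$, $\Omega$ follows the Bernoulli model with parameter $p\in(0,1]$, and $\widehat Z\in\mathbb C^{dn_1\times dn_2}$ is a fixed block diagonal matrix. Then with high probability $$\Big\|\Big(\tfrac1p\mathcal P_{\widehat T}\widehat{\mathcal G}\mathcal P_\Omega\widehat{\mathcal G}^*-\mathcal P_{\widehat T}\widehat{\mathcal G}\widehat{\mathcal G}^*\Big)\widehat Z\Big\|_{\widehat{\mathcal G},\infty}\le C\,\frac{\mu_0 r}{n}\Big(\sqrt{\tfrac{\log(dn)}{p}}\|\widehat Z\|_{\widehat{\mathcal G},F}+\tfrac{\log(dn)}{p}\|\widehat Z\|_{\widehat{\mathcal G},\infty}\Big)$$ for an absolute constant $C>0$.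
   Context: Let $d,n\ge1$ with $n$ odd and $n_1=n_2=(n+1)/2$. For $a\in[n]$, $w_a=\#\{(j,k)\in[n_1]\times[n_2]:j+k=a+1\}$, $G_a=w_a^{-1/2}\sum_{j+k=a+1}e_je_k^{\mathsf T}$, $\mathcal G(x)=\sum_ax_aG_a$. $F$ is the $d\times d$ unitary DFT matrix. $\widehat{\mathcal G}$ maps $X\in\mathbb C^{d\times n}$ to the block diagonal matrix whose $i$-th block is $\mathcal G$ of the $i$-th row of $FX$; $\widehat{\mathcal G}^*$ is its adjoint w.r.t. $\langle A,B\rangle=\mathrm{tr}(AB^{\mathsf H})$. $\widehat G_{j,k}=\widehat{\mathcal G}(e_je_k^{\mathsf T})=\mathrm{diag}(F_{1j}G_k,\dots,F_{dj}G_k)$. $\|\widehat Z\|_{\widehat{\mathcal G},F}=\big(\sum_{(j,k)}\frac1{dw_k}|\langle\widehat Z,\widehat G_{j,k}\rangle|^2\big)^{1/2}$, $\|\widehat Z\|_{\widehat{\mathcal G},\infty}=\max_{(j,k)}\frac1{\sqrt{dw_k}}|\langle\widehat Z,\widehat G_{j,k}\rangle|$. $\mathcal P_\Omega$ keeps entries in $\Omega\subset[d]\times[n]$ and zeroes the rest; Bernoulli model: each index in $\Omega$ independently with probability $p$. $\widehat Z^\natural=\mathrm{diag}(\widehat Z^\natural_a)$ with each block of rank $r$ and compact SVD $\widehat U_a\widehat\Sigma_a\widehat V_a^{\mathsf H}$; $\mathcal P_{\widehat T}$ acts blockwise by $W_a\mapsto\widehat U_a\widehat U_a^{\mathsf H}W_a+W_a\widehat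 V_a\widehat V_a^{\mathsf H}-\widehat U_a\widehat U_a^{\mathsf H}W_a\widehat V_a\widehat V_a^{\mathsf H}$. Average case incoherence with parameter $\mu_0$: $\max_i\frac1d\sum_a\|e_i^{\mathsf T}\widehat U_a\|_2^2\le\mu_0r/n$ and $\max_j\frac1d\sum_a\|e_j^{\mathsf T}\widehat V_a\|_2^2\le\mu_0r/n$. ''With high probability'': probability at least $1-c_1(dn)^{-c_2}$ for absolute constants $c_1,c_2>0$. *)

(* Defs.v *)
From Stdlib Require Import Reals List Bool Arith.
Open Scope R_scope.

Record C := mkC { Cre : R; Cim : R }.
Definition C0 : C := mkC 0 0.
Definition CR (x : R) : C := mkC x 0.
Definition Cadd (x y : C) : C := mkC (Cre x + Cre y) (Cim x + Cim y).
Definition Csub (x y : C) : C := mkC (Cre x - Cre y) (Cim x - Cim y).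
Definition Cmul (x y : C) : C :=
  mkC (Cre x * Cre y - Cim x * Cim y) (Cre x * Cim y + Cim x * Cre y).
Definition Cconj (x : C) : C := mkC (Cre x) (- Cim x).
Definition Cscale (a : R) (x : C) : C := mkC (a * Cre x) (a * Cim x).
Definition Cmod (x : C) : R := sqrt (Cre x ^ 2 + Cim x ^ 2).

Fixpoint sumR (n : nat) (f : nat -> R) : R :=
  match n with O => 0 | S k => sumR k f + f k end.
Fixpoint sumC (n : nat) (f : nat -> C) : C :=
  match n with O => C0 | S k => Cadd (sumC k f) (f k) end.
(* maximum of f 0, ..., f (n-1); only used on nonnegative values (base 0) *)
Fixpoint maxR (n : nat) (f : nat -> R) : R :=
  match n with O => 0 | S k => Rmax (maxR k f) (f k) end.

(* ---------- matrices (0-based indices; entries outside range unused) ---------- *)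
Definition Mat := nat -> nat -> C.
(* block diagonal matrix: family of blocks indexed by i in {0..d-1} *)
Definition Blocks := nat -> Mat.

Definition mmul (k : nat) (A B : Mat) : Mat :=
  fun i j => sumC k (fun t => Cmul (A i t) (B t j)).
Definition ctrans (A : Mat) : Mat := fun i j => Cconj (A j i).
Definition madd (A B : Mat) : Mat := fun i j => Cadd (A i j) (B i j).
Definition msub (A B : Mat) : Mat := fun i j => Csub (A i j) (B i j).
Definition mscale (a : R) (A : Mat) : Mat := fun i j => Cscale a (A i j).
Definition idmat : Mat := fun i j => if Nat.eqb i j then CR 1 else C0.

(* ---------- Hankel structure, n odd, n1 = n2 = (n+1)/2 ---------- *)
Definition hsize (n : nat) : nat := Nat.div (n + 1) 2.

Definition hw (n a : nat) : R :=
  sumR (hsize n) (fun j => sumR (hsize n) (fun k => if Nat.eqb (j + k)%nat a then 1 else 0)).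

Definition Gmat (n a : nat) : Mat := fun j k =>
  if (Nat.ltb j (hsize n) && Nat.ltb k (hsize n) && Nat.eqb (j + k)%nat a)%bool
  then CR (/ sqrt (hw n a)) else C0.

Definition Hank (n : nat) (x : nat -> C) : Mat :=
  fun j k => sumC n (fun a => Cmul (x a) (Gmat n a j k)).

Definition Fdft (d i l : nat) : C :=
  Cscale (/ sqrt (INR d))
    (mkC (cos (- 2 * PI * INR (i * l)%nat / INR d)) (sin (- 2 * PI * INR (i * l)%nat / INR d))).

(* Ghat X : i-th block is G of the i-th row of F X ; X is d x n *)
Definition Ghat (d n : nat) (X : Mat) : Blocks :=
  fun i => Hank n (fun a => sumC d (fun l => Cmul (Fdft d i l) (X l a))).

Definition binner (d n : nat) (A B : Blocks) : C :=
  sumC d (fun i => sumC (hsize n) (fun j => sumC (hsize n)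
    (fun k => Cmul (A i j k) (Cconj (B i j k))))).

Definition Eunit (l a : nat) : Mat :=
  fun l' a' => if (Nat.eqb l' l && Nat.eqb a' a)%bool then CR 1 else C0.

Definition GhatE (d n l a : nat) : Blocks := Ghat d n (Eunit l a).

(* adjoint of Ghat w.r.t. <.,.>: (Ghat^adj W)_{l a} = <W, Ghat_{l,a}> *)
Definition Gstar (d n : nat) (W : Blocks) : Mat :=
  fun l a => binner d n W (GhatE d n l a).

Definition normGF (d n : nat) (Z : Blocks) : R :=
  sqrt (sumR d (fun l => sumR n (fun a =>
    / (INR d * hw n a) * (Cmod (binner d n Z (GhatE d n l a))) ^ 2))).

Definition normGinf (d n : nat) (Z : Blocks) : R :=
  maxR d (fun l => maxR n (fun a =>
    / sqrt (INR d * hw n a) * Cmod (binner d n Z (GhatE d n l a)))).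

(* Omega is encoded as a bit list of length d*n; (l,a) is in Omega iff bit l*n+a is true *)
Definition POmega (n : nat) (om : list bool) (X : Mat) : Mat :=
  fun l a => if nth (l * n + a)%nat om false then X l a else C0.

Fixpoint allbits (N : nat) : list (list bool) :=
  match N with
  | O => nil :: nil
  | S k => map (cons true) (allbits k) ++ map (cons false) (allbits k)
  end.

Definition bern_weight (p : R) (om : list bool) : R :=
  fold_right (fun (b : bool) (acc : R) => (if b then p else 1 - p) * acc) 1 om.

Definition bern_expect (N : nat) (p : R) (f : list bool -> R) : R :=
  fold_right (fun (om : list bool) (acc : R) => bern_weight p om * f om + acc) 0 (allbits N).

Definition PT (m r : nat) (U V : Blocks) (W : Blocks) : Blocks :=
  fun i =>
    let PU := mmul r (U i) (ctrans (U i)) in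
    let PV := mmul r (V i) (ctrans (V i)) in
    msub (madd (mmul m PU (W i)) (mmul m (W i) PV)) (mmul m (mmul m PU (W i)) PV).

Definition bsub (A B : Blocks) : Blocks := fun i => msub (A i) (B i).

Definition lemma_op (d n r : nat) (U V : Blocks) (p : R) (om : list bool) (Z : Blocks) : Blocks :=
  bsub (PT (hsize n) r U V (fun i => mscale (/ p) (Ghat d n (POmega n om (Gstar d n Z)) i)))
       (PT (hsize n) r U V (Ghat d n (Gstar d n Z))).

Definition compact_svd (d n r : nat) (Znat U Sig V : Blocks) : Prop :=
  forall i, (i < d)%nat ->
    (forall j k, (j < hsize n)%nat -> (k < hsize n)%nat ->
       Znat i j k = mmul r (mmul r (U i) (Sig i)) (ctrans (V i)) j k) /\
    (forall j k, (j < r)%nat -> (k < r)%nat ->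
       mmul (hsize n) (ctrans (U i)) (U i) j k = idmat j k) /\
    (forall j k, (j < r)%nat -> (k < r)%nat ->
       mmul (hsize n) (ctrans (V i)) (V i) j k = idmat j k) /\
    (forall j k, (j < r)%nat -> (k < r)%nat -> j <> k -> Sig i j k = C0) /\
    (forall j, (j < r)%nat -> Cim (Sig i j j) = 0 /\ 0 < Cre (Sig i j j)).

Definition avg_incoherent (d n r : nat) (mu0 : R) (U V : Blocks) : Prop :=
  (forall j, (j < hsize n)%nat ->
     / INR d * sumR d (fun i => sumR r (fun t => Cmod (U i j t) ^ 2)) <= mu0 * INR r / INR n) /\
  (forall j, (j < hsize n)%nat ->
     / INR d * sumR d (fun i => sumR r (fun t => Cmod (V i j t) ^ 2)) <= mu0 * INR r / INR n).

(* Main.v *)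
Require Import Defs.
From Stdlib Require Import Reals List Arith.
Open Scope R_scope.
From Stdlib Require Import Lra Lia Psatz Ring Field FunctionalExtensionality.
Import Defs.
Open Scope R_scope.

Definition Copp (x : C) : C := mkC (- Cre x) (- Cim x).

Lemma Ceq : forall x y : C, Cre x = Cre y -> Cim x = Cim y -> x = y.
Proof. intros [a b] [c e]; simpl; intros; subst; reflexivity. Qed.

Lemma Cth : ring_theory C0 (CR 1) Cadd Cmul Csub Copp (@eq C).
Proof.
  constructor; intros;
  repeat match goal with x : C |- _ => destruct x end;
  apply Ceq; unfold Cadd, Cmul, Csub, Copp, C0, CR; simpl; ring.
Qed.
Add Ring Cring : Cth.

Lemma Cre_add x y : Cre (Cadd x y) = Cre x + Cre y. Proof. reflexivity. Qed.
Lemma Cim_add x y : Cim (Cadd x y) = Cim x + Cim y. Proof. reflexivity. Qed.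

Lemma Cconj_mul x y : Cconj (Cmul x y) = Cmul (Cconj x) (Cconj y).
Proof. destruct x, y; apply Ceq; simpl; ring. Qed.
Lemma Cconj_add x y : Cconj (Cadd x y) = Cadd (Cconj x) (Cconj y).
Proof. destruct x, y; apply Ceq; simpl; ring. Qed.
Lemma Cconj_C0 : Cconj C0 = C0.
Proof. apply Ceq; simpl; ring. Qed.
Lemma Cconj_CR a : Cconj (CR a) = CR a.
Proof. apply Ceq; simpl; ring. Qed.
Lemma Cconj_invol x : Cconj (Cconj x) = x.
Proof. destruct x; apply Ceq; simpl; ring. Qed.

Lemma Cmod_ge0 x : 0 <= Cmod x.
Proof. apply sqrt_pos. Qed.

Lemma Cmod_sq x : Cmod x ^ 2 = Cre x ^ 2 + Cim x ^ 2.
Proof. unfold Cmod. rewrite pow2_sqrt; [reflexivity| nra]. Qed.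

Lemma Cmod_mul x y : Cmod (Cmul x y) = Cmod x * Cmod y.
Proof.
  destruct x as [a b], y as [c e]; unfold Cmod, Cmul; simpl.
  rewrite <- sqrt_mult by nra. f_equal. ring.
Qed.

Lemma Cmod_conj x : Cmod (Cconj x) = Cmod x.
Proof. destruct x; unfold Cmod; simpl; f_equal; ring. Qed.

Lemma Cmod_C0 : Cmod C0 = 0.
Proof. assert (H: Cre C0 ^2 + Cim C0^2 = 0) by (simpl; ring). unfold Cmod. rewrite H. apply sqrt_0. Qed.

Lemma Cmod_CR a : Cmod (CR a) = Rabs a.
Proof. assert (H: Cre (CR a) ^2 + Cim (CR a)^2 = Rsqr a) by (simpl; unfold Rsqr; ring). unfold Cmod. rewrite H. apply sqrt_Rsqr_abs. Qed.

Lemma Cmod_add x y : Cmod (Cadd x y) <= Cmod x + Cmod y.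
Proof.
  destruct x as [a b], y as [c e]; unfold Cmod, Cadd; cbn [Cre Cim].
  set (X := sqrt (a^2+b^2)). set (Y := sqrt (c^2+e^2)).
  assert (HX : 0 <= X) by apply sqrt_pos. assert (HY : 0 <= Y) by apply sqrt_pos.
  assert (HX2 : X * X = a^2+b^2) by (apply sqrt_sqrt; nra).
  assert (HY2 : Y * Y = c^2+e^2) by (apply sqrt_sqrt; nra).
  assert (Hxy : a*c + b*e <= X*Y).
  { assert ((a*c+b*e)^2 <= (X*Y)^2).
    { replace ((X*Y)^2) with ((X*X)*(Y*Y)) by ring. rewrite HX2, HY2.
      pose proof (pow2_ge_0 (a*e-b*c)). nra. }
    assert (0 <= X*Y) by nra. nra. }
  rewrite <- (sqrt_pow2 (X+Y)) by lra. apply sqrt_le_1_alt. nra.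
Qed.

Lemma Rabs_Cre_le x : Rabs (Cre x) <= Cmod x.
Proof. destruct x as [a b]; unfold Cmod; simpl.
  rewrite <- (sqrt_Rsqr_abs a). apply sqrt_le_1_alt. unfold Rsqr. nra. Qed.
Lemma Rabs_Cim_le x : Rabs (Cim x) <= Cmod x.
Proof. destruct x as [a b]; unfold Cmod; simpl.
  rewrite <- (sqrt_Rsqr_abs b). apply sqrt_le_1_alt. unfold Rsqr. nra. Qed.

Lemma Cmod_le_re_im x : Cmod x <= Rabs (Cre x) + Rabs (Cim x).
Proof.
  destruct x as [a b]; unfold Cmod; simpl.
  rewrite <- (sqrt_pow2 (Rabs a + Rabs b)) by (pose proof (Rabs_pos a); pose proof (Rabs_pos b); lra).
  apply sqrt_le_1_alt.
  pose proof (Rabs_pos a); pose proof (Rabs_pos b).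
  assert (a^2 = Rabs a ^2) by (rewrite <- pow2_abs; reflexivity).
  assert (b^2 = Rabs b ^2) by (rewrite <- pow2_abs; reflexivity).
  nra.
Qed.

Lemma Cmul_conj_self x : Cmul x (Cconj x) = CR (Cmod x ^ 2).
Proof. rewrite Cmod_sq. destruct x; apply Ceq; simpl; ring. Qed.

Lemma Cmod_scale a x : 0 <= a -> Cmod (Cscale a x) = a * Cmod x.
Proof. intros. destruct x as [u v]; unfold Cmod, Cscale; cbn [Cre Cim].
  replace ((a*u)^2+(a*v)^2) with (a^2*(u^2+v^2)) by ring.
  rewrite sqrt_mult_alt by nra. rewrite sqrt_pow2 by lra. reflexivity. Qed.

Lemma Cscale_CR a x : Cscale a x = Cmul (CR a) x.
Proof. destruct x; apply Ceq; simpl; ring. Qed.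

Lemma sumR_ext n f g : (forall k, (k < n)%nat -> f k = g k) -> sumR n f = sumR n g.
Proof. induction n; simpl; intros H; [reflexivity|]. rewrite IHn by (intros; apply H; lia). rewrite H by lia. reflexivity. Qed.
Lemma sumR_add n f g : sumR n (fun k => f k + g k) = sumR n f + sumR n g.
Proof. induction n; simpl; [ring|]. rewrite IHn; ring. Qed.
Lemma sumR_scal n c f : c * sumR n f = sumR n (fun k => c * f k).
Proof. induction n; simpl; [ring|]. rewrite <- IHn; ring. Qed.
Lemma sumR_opp n f : sumR n (fun k => - f k) = - sumR n f.
Proof. induction n; simpl; [ring|]. rewrite IHn; ring. Qed.
Lemma sumR_sub n f g : sumR n (fun k => f k - g k) = sumR n f - sumR n g.
Proof. induction n; simpl; [ring|]. rewrite IHn; ring. Qed.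
Lemma sumR_0 n : sumR n (fun _ => 0) = 0.
Proof. induction n; simpl; [ring|]. rewrite IHn; ring. Qed.
Lemma sumR_le n f g : (forall k, (k < n)%nat -> f k <= g k) -> sumR n f <= sumR n g.
Proof. induction n; simpl; intros H; [lra|]. pose proof (H n ltac:(lia)). pose proof (IHn ltac:(intros; apply H; lia)). lra. Qed.
Lemma sumR_ge0 n f : (forall k, (k < n)%nat -> 0 <= f k) -> 0 <= sumR n f.
Proof. intros H. rewrite <- (sumR_0 n). apply sumR_le. auto. Qed.
Lemma sumR_swap n m (f : nat -> nat -> R) :
  sumR n (fun i => sumR m (fun j => f i j)) = sumR m (fun j => sumR n (fun i => f i j)).
Proof. induction n; simpl. - rewrite sumR_0; reflexivity. - rewrite IHn. rewrite <- sumR_add. reflexivity. Qed.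
Lemma sumR_single_le n f k : (forall j, (j < n)%nat -> 0 <= f j) -> (k < n)%nat -> f k <= sumR n f.
Proof. induction n; intros H Hk; [lia|]. simpl. destruct (Nat.eq_dec k n).
  - subst. pose proof (sumR_ge0 n f ltac:(intros; apply H; lia)). lra.
  - pose proof (IHn ltac:(intros; apply H; lia) ltac:(lia)). pose proof (H n ltac:(lia)). lra. Qed.
Lemma sumR_first n f : sumR (S n) f = f O + sumR n (fun k => f (S k)).
Proof. induction n; simpl in *. ring. rewrite IHn. ring. Qed.
Lemma sumR_plus a b f : sumR (a + b) f = sumR a f + sumR b (fun k => f (a + k)%nat).
Proof. induction b; simpl. rewrite Nat.add_0_r; ring. rewrite Nat.add_succ_r. simpl. rewrite IHb. ring. Qed.
Lemma sumR_flat d n f :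
  sumR d (fun j => sumR n (fun k => f (j * n + k)%nat)) = sumR (d * n) f.
Proof. induction d; simpl; [reflexivity|]. rewrite IHd. rewrite Nat.add_comm. rewrite sumR_plus. reflexivity. Qed.

Lemma CS_sq n x y : (sumR n (fun k => x k * y k))^2 <= sumR n (fun k => x k ^ 2) * sumR n (fun k => y k ^ 2).
Proof.
  set (A := sumR n (fun k => x k ^2)). set (B := sumR n (fun k => y k ^2)). set (P := sumR n (fun k => x k * y k)).
  assert (HQ : forall t, 0 <= A - 2 * t * P + t^2 * B).
  { intro t. assert (E : A - 2*t*P + t^2*B = sumR n (fun k => (x k - t * y k)^2)).
    { unfold A, B, P. rewrite !sumR_scal. rewrite <- sumR_sub. rewrite <- sumR_add. apply sumR_ext; intros; ring. }
    rewrite E. apply sumR_ge0. intros; apply pow2_ge_0. }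
  assert (HB : 0 <= B) by (apply sumR_ge0; intros; apply pow2_ge_0).
  assert (HA : 0 <= A) by (apply sumR_ge0; intros; apply pow2_ge_0).
  destruct (Req_dec B 0) as [HB0|HB0].
  - assert (P = 0).
    { destruct (Req_dec P 0); auto. exfalso. pose proof (HQ ((A + 1) / (2 * P))).
      rewrite HB0 in H0. replace (A - 2 * ((A + 1) / (2 * P)) * P + ((A + 1) / (2 * P)) ^ 2 * 0) with (A - (A+1)) in H0 by (field; auto). lra. }
    rewrite H, HB0. lra.
  - pose proof (HQ (P / B)). assert (0 < B) by lra.
    assert (0 <= (A - 2*(P/B)*P + (P/B)^2*B) * B) by (apply Rmult_le_pos; lra).
    replace ((A - 2 * (P / B) * P + (P / B) ^ 2 * B) * B) with (A*B - P^2) in H1 by (field; lra).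
    lra.
Qed.

Lemma CS n x y : sumR n (fun k => x k * y k) <= sqrt (sumR n (fun k => x k ^ 2)) * sqrt (sumR n (fun k => y k ^ 2)).
Proof.
  rewrite <- sqrt_mult by (apply sumR_ge0; intros; apply pow2_ge_0).
  destruct (Rle_dec (sumR n (fun k => x k * y k)) 0). { pose proof (sqrt_pos (sumR n (fun k : nat => x k ^ 2) * sumR n (fun k : nat => y k ^ 2))). lra. }
  rewrite <- (sqrt_pow2 (sumR n (fun k => x k * y k))) by lra.
  apply sqrt_le_1_alt. apply CS_sq.
Qed.

Lemma sum_ind_le1 n (b : nat -> bool) c :
  (forall k, b k = true -> k = c) -> sumR n (fun k => if b k then 1 else 0) <= 1.
Proof.
  intros Hb. induction n; simpl; [lra|].
  destruct (b n) eqn:E.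
  - apply Hb in E. subst. assert (sumR c (fun k => if b k then 1 else 0) = 0).
    { transitivity (sumR c (fun _ => 0)); [|apply sumR_0]. apply sumR_ext. intros k Hk. destruct (b k) eqn:E'; auto. apply Hb in E'. lia. }
    lra.
  - lra.
Qed.

Lemma sumC_ext n f g : (forall k, (k < n)%nat -> f k = g k) -> sumC n f = sumC n g.
Proof. induction n; simpl; intros H; [reflexivity|]. rewrite IHn by (intros; apply H; lia). rewrite H by lia. reflexivity. Qed.
Lemma sumC_add n f g : sumC n (fun k => Cadd (f k) (g k)) = Cadd (sumC n f) (sumC n g).
Proof. induction n; simpl; [apply Ceq; simpl; ring|]. rewrite IHn; ring. Qed.
Lemma sumC_mull n c f : Cmul c (sumC n f) = sumC n (fun k => Cmul c (f k)).
Proof. induction n; simpl; [apply Ceq; simpl; ring|]. rewrite <- IHn; ring. Qed.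
Lemma sumC_mulr n c f : Cmul (sumC n f) c = sumC n (fun k => Cmul (f k) c).
Proof. induction n; simpl; [apply Ceq; simpl; ring|]. rewrite <- IHn; ring. Qed.
Lemma sumC_0 n : sumC n (fun _ => C0) = C0.
Proof. induction n; simpl; [reflexivity|]. rewrite IHn; ring. Qed.
Lemma sumC_sub n f g : sumC n (fun k => Csub (f k) (g k)) = Csub (sumC n f) (sumC n g).
Proof. induction n; simpl; [apply Ceq; simpl; ring|]. rewrite IHn; ring. Qed.
Lemma sumC_swap n m (f : nat -> nat -> C) :
  sumC n (fun i => sumC m (fun j => f i j)) = sumC m (fun j => sumC n (fun i => f i j)).
Proof. induction n; simpl. - rewrite sumC_0; reflexivity. - rewrite IHn. rewrite <- sumC_add. reflexivity. Qed.
Lemma sumC_delta n c f : (c < n)%nat -> sumC n (fun k => if Nat.eqb k c then f k else C0) = f c.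
Proof.
  induction n; intros Hc; [lia|]. simpl. destruct (Nat.eqb_spec n c).
  - subst. assert (sumC c (fun k => if Nat.eqb k c then f k else C0) = C0).
    { transitivity (sumC c (fun _ => C0)); [|apply sumC_0]. apply sumC_ext. intros k Hk. destruct (Nat.eqb_spec k c); [lia|reflexivity]. }
    rewrite H. ring.
  - rewrite IHn by lia. ring.
Qed.
Lemma sumC_conj n f : Cconj (sumC n f) = sumC n (fun k => Cconj (f k)).
Proof. induction n; simpl; [apply Cconj_C0|]. rewrite Cconj_add, IHn. reflexivity. Qed.
Lemma Cre_sumC n f : Cre (sumC n f) = sumR n (fun k => Cre (f k)).
Proof. induction n; simpl; [reflexivity|]. rewrite IHn. reflexivity. Qed.
Lemma Cim_sumC n f : Cim (sumC n f) = sumR n (fun k => Cim (f k)).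
Proof. induction n; simpl; [reflexivity|]. rewrite IHn. reflexivity. Qed.
Lemma Cmod_sumC n f : Cmod (sumC n f) <= sumR n (fun k => Cmod (f k)).
Proof. induction n; simpl. rewrite Cmod_C0; lra. pose proof (Cmod_add (sumC n f) (f n)). lra. Qed.
Lemma sumC_CR n f : sumC n (fun k => CR (f k)) = CR (sumR n f).
Proof. induction n; simpl. reflexivity. rewrite IHn. apply Ceq; simpl; ring. Qed.

Lemma CS_C n (z w : nat -> C) :
  Cmod (sumC n (fun k => Cmul (z k) (w k))) <=
  sqrt (sumR n (fun k => Cmod (z k) ^ 2)) * sqrt (sumR n (fun k => Cmod (w k) ^ 2)).
Proof.
  eapply Rle_trans. apply Cmod_sumC.
  eapply Rle_trans; [|apply CS]. right. apply sumR_ext. intros. apply Cmod_mul.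
Qed.

Definition cmat (c : C) (M : Mat) : Mat := fun j k => Cmul c (M j k).
Definition badd (A B : Blocks) : Blocks := fun i => madd (A i) (B i).
Definition bcmul (f : nat -> C) (A : Blocks) : Blocks := fun i => cmat (f i) (A i).

Ltac meq := let j := fresh in let k := fresh in extensionality j; extensionality k.

Lemma mmul_addl k A B M : mmul k (madd A B) M = madd (mmul k A M) (mmul k B M).
Proof. meq. unfold mmul, madd. rewrite <- sumC_add. apply sumC_ext; intros; ring. Qed.
Lemma mmul_addr k A B M : mmul k M (madd A B) = madd (mmul k M A) (mmul k M B).
Proof. meq. unfold mmul, madd. rewrite <- sumC_add. apply sumC_ext; intros; ring. Qed.
Lemma mmul_cmatl k c A B : mmul k (cmat c A) B = cmat c (mmul k A B).
Proof. meq. unfold mmul, cmat. rewrite sumC_mull. apply sumC_ext; intros; ring. Qed.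
Lemma mmul_cmatr k c A B : mmul k A (cmat c B) = cmat c (mmul k A B).
Proof. meq. unfold mmul, cmat. rewrite sumC_mull. apply sumC_ext; intros; ring. Qed.

Lemma PT_add m r U V A B : PT m r U V (badd A B) = badd (PT m r U V A) (PT m r U V B).
Proof.
  extensionality i. unfold PT, badd. cbv beta zeta.
  set (PU := mmul r (U i) (ctrans (U i))). set (PV := mmul r (V i) (ctrans (V i))).
  rewrite (mmul_addr m (A i) (B i) PU), (mmul_addl m (A i) (B i) PV).
  rewrite (mmul_addl m (mmul m PU (A i)) (mmul m PU (B i)) PV).
  meq. unfold msub, madd. ring.
Qed.

Lemma PT_scale m r U V f A : PT m r U V (bcmul f A) = bcmul f (PT m r U V A).
Proof.
  extensionality i. unfold PT, bcmul. cbv beta zeta.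
  set (PU := mmul r (U i) (ctrans (U i))). set (PV := mmul r (V i) (ctrans (V i))).
  rewrite (mmul_cmatr m (f i) PU (A i)), (mmul_cmatl m (f i) (A i) PV).
  rewrite (mmul_cmatl m (f i) (mmul m PU (A i)) PV).
  meq. unfold msub, madd, cmat. ring.
Qed.

Lemma binner_add d n A B G : binner d n (badd A B) G = Cadd (binner d n A G) (binner d n B G).
Proof.
  unfold binner, badd, madd. rewrite <- sumC_add. apply sumC_ext; intros.
  rewrite <- sumC_add. apply sumC_ext; intros.
  rewrite <- sumC_add. apply sumC_ext; intros. ring.
Qed.
Lemma binner_scal d n c A G : binner d n (bcmul (fun _ => c) A) G = Cmul c (binner d n A G).
Proof.
  unfold binner, bcmul, cmat. rewrite sumC_mull. apply sumC_ext; intros.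
  rewrite sumC_mull. apply sumC_ext; intros.
  rewrite sumC_mull. apply sumC_ext; intros. ring.
Qed.
Lemma binner_sub d n A B G : binner d n (bsub A B) G = Csub (binner d n A G) (binner d n B G).
Proof.
  unfold binner, bsub, msub. rewrite <- sumC_sub. apply sumC_ext; intros.
  rewrite <- sumC_sub. apply sumC_ext; intros.
  rewrite <- sumC_sub. apply sumC_ext; intros. ring.
Qed.

Lemma Hank_add n x y : Hank n (fun a => Cadd (x a) (y a)) = madd (Hank n x) (Hank n y).
Proof. meq. unfold Hank, madd. rewrite <- sumC_add. apply sumC_ext; intros; ring. Qed.
Lemma Hank_scal n c x : Hank n (fun a => Cmul c (x a)) = cmat c (Hank n x).
Proof. meq. unfold Hank, cmat. rewrite sumC_mull. apply sumC_ext; intros; ring. Qed.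

Lemma Ghat_add d n W1 W2 : Ghat d n (madd W1 W2) = badd (Ghat d n W1) (Ghat d n W2).
Proof.
  extensionality i. unfold Ghat, badd. rewrite <- Hank_add. f_equal. extensionality a.
  unfold madd. rewrite <- sumC_add. apply sumC_ext; intros; ring.
Qed.
Lemma Ghat_scal d n c W : Ghat d n (cmat c W) = bcmul (fun _ => c) (Ghat d n W).
Proof.
  extensionality i. unfold Ghat, bcmul. rewrite <- Hank_scal. f_equal. extensionality a.
  unfold cmat. rewrite sumC_mull. apply sumC_ext; intros; ring.
Qed.
Lemma Ghat_local d n W W' : (forall j k, (j < d)%nat -> (k < n)%nat -> W j k = W' j k) -> Ghat d n W = Ghat d n W'.
Proof.
  intros H. extensionality i. unfold Ghat, Hank. meq. apply sumC_ext; intros a Ha. f_equal.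
  apply sumC_ext; intros l Hl. rewrite H by auto. reflexivity.
Qed.

Definition msum (N : nat) (f : nat -> Mat) : Mat := fun i j => sumC N (fun t => f t i j).

Lemma lin_repr d n (Phi : Mat -> C)
  (Hadd : forall A B, Phi (madd A B) = Cadd (Phi A) (Phi B))
  (Hsc : forall c A, Phi (cmat c A) = Cmul c (Phi A))
  (Hloc : forall W W', (forall j k, (j < d)%nat -> (k < n)%nat -> W j k = W' j k) -> Phi W = Phi W')
  (W : Mat) :
  Phi W = sumC d (fun j => sumC n (fun k => Cmul (W j k) (Phi (Eunit j k)))).
Proof.
  assert (H0 : Phi (fun _ _ => C0) = C0).
  { replace (fun _ _ : nat => C0) with (cmat C0 (fun _ _ => C0)) by (meq; unfold cmat; ring).
    rewrite Hsc. ring. }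
  assert (Hs : forall N f, Phi (msum N f) = sumC N (fun t => Phi (f t))).
  { induction N; intros f. - simpl. apply H0.
    - simpl. rewrite <- IHN. rewrite <- Hadd. reflexivity. }
  rewrite (Hloc W (msum d (fun j => msum n (fun k => cmat (W j k) (Eunit j k))))).
  - rewrite Hs. apply sumC_ext; intros j Hj. rewrite Hs. apply sumC_ext; intros k Hk.
    rewrite Hsc. reflexivity.
  - intros j' k' Hj' Hk'. unfold msum, cmat, Eunit.
    rewrite (sumC_ext d _ (fun j => if Nat.eqb j j' then W j k' else C0)).
    + rewrite sumC_delta by auto. reflexivity.
    + intros j Hj. rewrite (sumC_ext n _ (fun k => if Nat.eqb k k' then (if Nat.eqb j j' then W j k else C0) else C0)).
      * rewrite sumC_delta by auto. reflexivity.
      * intros k Hk. destruct (Nat.eqb_spec k k'), (Nat.eqb_spec j j'), (Nat.eqb_spec j' j), (Nat.eqb_spec k' k);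
          simpl; subst; try lia; apply Ceq; simpl; ring.
Qed.

Definition delta (n : nat) (om : list bool) (j k : nat) : R :=
  if nth (j * n + k)%nat om false then 1 else 0.

Definition Phi d n r U V G (W : Mat) : C := binner d n (PT (hsize n) r U V (Ghat d n W)) G.

Lemma Phi_repr d n r U V G W :
  Phi d n r U V G W = sumC d (fun j => sumC n (fun k => Cmul (W j k) (Phi d n r U V G (Eunit j k)))).
Proof.
  apply lin_repr.
  - intros. unfold Phi. rewrite Ghat_add, PT_add, binner_add. reflexivity.
  - intros. unfold Phi. rewrite Ghat_scal, PT_scale, binner_scal. reflexivity.
  - intros. unfold Phi. rewrite (Ghat_local d n W0 W') by auto. reflexivity.
Qed.

Lemma op_expand d n r U V p om Z G : 0 < p ->
  binner d n (lemma_op d n r U V p om Z) G =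
  sumC d (fun j => sumC n (fun k =>
    Cmul (CR (delta n om j k / p - 1)) (Cmul (Gstar d n Z j k) (Phi d n r U V G (Eunit j k))))).
Proof.
  intros Hp. unfold lemma_op. rewrite binner_sub.
  set (Y := Gstar d n Z).
  replace (fun i => mscale (/ p) (Ghat d n (POmega n om Y) i)) with (Ghat d n (cmat (CR (/p)) (POmega n om Y))).
  2:{ rewrite Ghat_scal. extensionality i. unfold bcmul, mscale, cmat. meq. apply Ceq; simpl; ring. }
  fold (Phi d n r U V G (cmat (CR (/ p)) (POmega n om Y))). fold (Phi d n r U V G Y).
  rewrite (Phi_repr d n r U V G (cmat _ _)), (Phi_repr d n r U V G Y).
  rewrite <- sumC_sub. apply sumC_ext; intros j Hj. rewrite <- sumC_sub. apply sumC_ext; intros k Hk.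
  unfold cmat, POmega, delta. destruct (nth (j * n + k) om false); apply Ceq; simpl; field; lra.
Qed.

Lemma GhatE_eq d n j k : (j < d)%nat -> (k < n)%nat ->
  GhatE d n j k = bcmul (fun i => Fdft d i j) (fun _ => Gmat n k).
Proof.
  intros Hj Hk. unfold GhatE, Ghat, bcmul, cmat, Hank. extensionality i. extensionality s. extensionality t.
  rewrite (sumC_ext n _ (fun a => if Nat.eqb a k then Cmul (Fdft d i j) (Gmat n a s t) else C0)).
  - apply sumC_delta; auto.
  - intros a Ha. unfold Eunit.
    rewrite (sumC_ext d _ (fun l => if Nat.eqb l j then (if Nat.eqb a k then Fdft d i l else C0) else C0)).
    + rewrite sumC_delta by auto. destruct (Nat.eqb a k); apply Ceq; simpl; ring.
    + intros l Hl. destruct (Nat.eqb l j), (Nat.eqb a k); simpl; apply Ceq; simpl; ring.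
Qed.

Lemma Cmod_Fdft d i j : (1 <= d)%nat -> Cmod (Fdft d i j) = / sqrt (INR d).
Proof.
  intros Hd. unfold Fdft. rewrite Cmod_scale.
  2:{ apply Rlt_le, Rinv_0_lt_compat, sqrt_lt_R0. apply lt_0_INR; lia. }
  unfold Cmod; cbn [Cre Cim]. rewrite (Rplus_comm (_ ^ 2)). rewrite sin2_cos2 || idtac.
  match goal with |- _ * sqrt ?e = _ => replace e with 1 end.
  - rewrite sqrt_1; ring.
  - rewrite <- (sin2_cos2 (- 2 * PI * INR (i * j) / INR d)). unfold Rsqr. ring.
Qed.

Definition Tblk m r (U V : Blocks) k : Blocks := PT m r U V (fun _ => Gmat (2 * m - 1) k).

Lemma Cmod_Gmat n a s t : Cmod (Gmat n a s t) =
  (if (Nat.ltb s (hsize n) && Nat.ltb t (hsize n) && Nat.eqb (s + t) a)%bool then 1 else 0) * / sqrt (hw n a).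
Proof.
  unfold Gmat. destruct (_ && _ && _)%bool.
  - rewrite Cmod_CR. rewrite Rabs_right. ring. apply Rle_ge.
    destruct (Rle_lt_dec (hw n a) 0).
    + rewrite sqrt_neg_0 by auto. rewrite Rinv_0. lra.
    + apply Rlt_le, Rinv_0_lt_compat, sqrt_lt_R0; auto.
  - rewrite Cmod_C0. ring.
Qed.

Lemma CR_inj a b : CR a = CR b -> a = b.
Proof. intros H. apply (f_equal Cre) in H. exact H. Qed.

Lemma proj_id m r (X : Mat) (b : nat -> C) :
  (forall u u', (u < r)%nat -> (u' < r)%nat ->
     sumC m (fun q => Cmul (Cconj (X q u)) (X q u')) = idmat u u') ->
  sumR m (fun q => Cmod (sumC r (fun u => Cmul (X q u) (b u))) ^ 2) = sumR r (fun u => Cmod (b u) ^ 2).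
Proof.
  intros Horth. apply CR_inj. rewrite <- !sumC_CR.
  rewrite (sumC_ext m _ (fun q => sumC r (fun u => sumC r (fun u' =>
     Cmul (Cmul (b u) (Cconj (b u'))) (Cmul (Cconj (X q u')) (X q u)))))).
  2:{ intros q Hq. rewrite <- Cmul_conj_self. rewrite sumC_conj. rewrite sumC_mulr.
      apply sumC_ext; intros u Hu. rewrite sumC_mull. apply sumC_ext; intros u' Hu'.
      rewrite Cconj_mul. ring. }
  rewrite sumC_swap. rewrite (sumC_ext r _ (fun u => Cmul (b u) (Cconj (b u)))).
  - apply sumC_ext; intros u Hu. apply Cmul_conj_self.
  - intros u Hu. rewrite sumC_swap.
    rewrite (sumC_ext r _ (fun u' => if Nat.eqb u' u then Cmul (b u') (Cconj (b u)) else C0)).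
    + rewrite sumC_delta by auto. reflexivity.
    + intros u' Hu'. rewrite <- sumC_mull. rewrite Horth by auto. unfold idmat.
      destruct (Nat.eqb_spec u' u); [subst|]; apply Ceq; simpl; ring.
Qed.

Definition rho r (U : Blocks) i s := sqrt (sumR r (fun u => Cmod (U i s u) ^ 2)).

Lemma rho_ge0 r U i s : 0 <= rho r U i s. Proof. apply sqrt_pos. Qed.

Lemma PU_bound r (U : Blocks) i s p :
  Cmod (mmul r (U i) (ctrans (U i)) s p) <= rho r U i s * rho r U i p.
Proof.
  unfold mmul, ctrans, rho. eapply Rle_trans. apply CS_C.
  right. f_equal. f_equal. apply sumR_ext; intros. rewrite Cmod_conj. reflexivity.
Qed.

Lemma PU_rowsum m r (U : Blocks) i s :
  (forall u u', (u < r)%nat -> (u' < r)%nat -> mmul m (ctrans (U i)) (U i) u u' = idmat u u') ->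
  sumR m (fun p => Cmod (mmul r (U i) (ctrans (U i)) s p) ^ 2) = rho r U i s ^ 2.
Proof.
  intros H. unfold rho. rewrite pow2_sqrt by (apply sumR_ge0; intros; apply pow2_ge_0).
  rewrite (sumR_ext m _ (fun p => Cmod (sumC r (fun u => Cmul (U i p u) (Cconj (U i s u)))) ^ 2)).
  - rewrite proj_id.
    + apply sumR_ext; intros; rewrite Cmod_conj; reflexivity.
    + intros. rewrite <- H by auto. reflexivity.
  - intros p Hp. rewrite <- (Cmod_conj (sumC r _)). unfold mmul, ctrans. rewrite sumC_conj. f_equal. f_equal.
    apply sumC_ext; intros. rewrite Cconj_mul, Cconj_invol. ring.
Qed.

Lemma PV_colsum m r (V : Blocks) i t :
  (forall u u', (u < r)%nat -> (u' < r)%nat -> mmul m (ctrans (V i)) (V i) u u' = idmat u u') ->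
  sumR m (fun q => Cmod (mmul r (V i) (ctrans (V i)) q t) ^ 2) = rho r V i t ^ 2.
Proof.
  intros H. unfold rho. rewrite pow2_sqrt by (apply sumR_ge0; intros; apply pow2_ge_0).
  unfold mmul at 1. unfold ctrans. rewrite proj_id.
  + apply sumR_ext; intros; rewrite Cmod_conj; reflexivity.
  + intros. rewrite <- H by auto. reflexivity.
Qed.

Definition ind n k p q : R :=
  if (Nat.ltb p (hsize n) && Nat.ltb q (hsize n) && Nat.eqb (p + q) k)%bool then 1 else 0.

Lemma ind_01 n k p q : ind n k p q = 0 \/ ind n k p q = 1.
Proof. unfold ind; destruct (_ && _ && _)%bool; auto. Qed.
Lemma ind_ge0 n k p q : 0 <= ind n k p q.
Proof. destruct (ind_01 n k p q) as [H|H]; rewrite H; lra. Qed.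
Lemma ind_sq n k p q : ind n k p q * ind n k p q = ind n k p q.
Proof. destruct (ind_01 n k p q) as [H|H]; rewrite H; lra. Qed.

Lemma ind_sum_p n k q N : sumR N (fun p => ind n k p q) <= 1.
Proof.
  apply (sum_ind_le1 N (fun p => (Nat.ltb p (hsize n) && Nat.ltb q (hsize n) && Nat.eqb (p + q) k)%bool) (k - q)).
  intros p H. apply andb_prop in H as [_ H]. apply Nat.eqb_eq in H. lia.
Qed.
Lemma ind_sum_q n k p N : sumR N (fun q => ind n k p q) <= 1.
Proof.
  apply (sum_ind_le1 N (fun q => (Nat.ltb p (hsize n) && Nat.ltb q (hsize n) && Nat.eqb (p + q) k)%bool) (k - p)).
  intros q H. apply andb_prop in H as [_ H]. apply Nat.eqb_eq in H. lia.
Qed.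

Definition gk n k := / sqrt (hw n k).
Lemma gk_ge0 n k : 0 <= gk n k.
Proof. unfold gk. destruct (Rle_lt_dec (hw n k) 0).
  + rewrite sqrt_neg_0 by auto. rewrite Rinv_0. lra.
  + apply Rlt_le, Rinv_0_lt_compat, sqrt_lt_R0; auto. Qed.

Lemma CmodG n k p q : Cmod (Gmat n k p q) = ind n k p q * gk n k.
Proof. rewrite Cmod_Gmat. reflexivity. Qed.

Lemma Cmod_sub x y : Cmod (Csub x y) <= Cmod x + Cmod y.
Proof. replace (Csub x y) with (Cadd x (Copp y)) by reflexivity.
  eapply Rle_trans. apply Cmod_add. unfold Cmod, Copp; cbn [Cre Cim].
  replace ((- Cre y)^2 + (- Cim y)^2) with (Cre y ^2 + Cim y^2) by ring. lra. Qed.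

Section Blk.
Variables (n r : nat) (U V : Blocks) (i k : nat).
Local Notation m := (hsize n).
Local Notation PU := (mmul r (U i) (ctrans (U i))).
Local Notation PV := (mmul r (V i) (ctrans (V i))).
Local Notation Gk := (Gmat n k).

Lemma bndA s t : Cmod (mmul m PU Gk s t) <= gk n k * sumR m (fun p => ind n k p t * rho r U i s * rho r U i p).
Proof.
  unfold mmul. eapply Rle_trans. apply Cmod_sumC. rewrite sumR_scal. apply sumR_le; intros p Hp.
  rewrite Cmod_mul. rewrite CmodG. pose proof (PU_bound r U i s p). 
  pose proof (ind_ge0 n k p t). pose proof (gk_ge0 n k). pose proof (Cmod_ge0 (PU s p)).
  replace (gk n k * (ind n k p t * rho r U i s * rho r U i p)) with ((rho r U i s * rho r U i p) * (ind n k p t * gk n k)) by ring.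
  apply Rmult_le_compat_r; [nra|exact H].
Qed.

Lemma bndB s t : Cmod (mmul m Gk PV s t) <= gk n k * sumR m (fun q => ind n k s q * rho r V i q * rho r V i t).
Proof.
  unfold mmul. eapply Rle_trans. apply Cmod_sumC. rewrite sumR_scal. apply sumR_le; intros q Hq.
  rewrite Cmod_mul. rewrite CmodG. pose proof (PU_bound r V i q t). 
  pose proof (ind_ge0 n k s q). pose proof (gk_ge0 n k). pose proof (Cmod_ge0 (PV q t)).
  replace (gk n k * (ind n k s q * rho r V i q * rho r V i t)) with ((ind n k s q * gk n k) * (rho r V i q * rho r V i t)) by ring.
  apply Rmult_le_compat_l; [nra|exact H].
Qed.

Hypothesis HU : forall u u', (u < r)%nat -> (u' < r)%nat -> mmul m (ctrans (U i)) (U i) u u' = idmat u u'.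
Hypothesis HV : forall u u', (u < r)%nat -> (u' < r)%nat -> mmul m (ctrans (V i)) (V i) u u' = idmat u u'.

Lemma bndC s t : Cmod (mmul m (mmul m PU Gk) PV s t) <= gk n k * rho r U i s * rho r V i t.
Proof.
  unfold mmul at 1. eapply Rle_trans. apply CS_C. cbv beta.
  rewrite PV_colsum by auto. rewrite sqrt_pow2 by apply rho_ge0.
  apply Rmult_le_compat_r. apply rho_ge0.
  rewrite <- (sqrt_pow2 (gk n k * rho r U i s)) by (apply Rmult_le_pos; [apply gk_ge0|apply rho_ge0]).
  apply sqrt_le_1_alt.
  assert (Hz : forall q, Cmod (mmul m PU Gk s q) ^ 2 <= gk n k ^ 2 * sumR m (fun p => ind n k p q * Cmod (PU s p) ^ 2)).
  { intro q. unfold mmul. 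
    assert (H1 : Cmod (sumC m (fun t0 => Cmul (PU s t0) (Gk t0 q))) <= gk n k * sumR m (fun p => ind n k p q * (ind n k p q * Cmod (PU s p)))).
    { eapply Rle_trans. apply Cmod_sumC. rewrite sumR_scal. apply sumR_le; intros p Hp.
      rewrite Cmod_mul, CmodG. replace (gk n k * (ind n k p q * (ind n k p q * Cmod (PU s p)))) with (gk n k * ((ind n k p q * ind n k p q) * Cmod (PU s p))) by ring. rewrite ind_sq. right; ring. }
    pose proof (CS_sq m (fun p => ind n k p q) (fun p => ind n k p q * Cmod (PU s p))) as H2. cbv beta in H2.
    assert (H3 : sumR m (fun k0 => ind n k k0 q ^ 2) <= 1).
    { eapply Rle_trans; [|apply (ind_sum_p n k q m)]. right. apply sumR_ext; intros. simpl. rewrite Rmult_1_r, ind_sq. reflexivity. }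
    assert (H4 : sumR m (fun k0 => (ind n k k0 q * Cmod (PU s k0)) ^ 2) = sumR m (fun p => ind n k p q * Cmod (PU s p) ^ 2)).
    { apply sumR_ext; intros. simpl. rewrite !Rmult_1_r. replace (ind n k k0 q * Cmod (PU s k0) * (ind n k k0 q * Cmod (PU s k0))) with ((ind n k k0 q * ind n k k0 q) * (Cmod (PU s k0) * Cmod (PU s k0))) by ring. rewrite ind_sq. ring. }
    rewrite H4 in H2.
    assert (H5 : 0 <= sumR m (fun p => ind n k p q * Cmod (PU s p) ^ 2)) by (apply sumR_ge0; intros; pose proof (ind_ge0 n k k0 q); pose proof (pow2_ge_0 (Cmod (PU s k0))); nra).
    assert (H6 : 0 <= sumR m (fun p => ind n k p q * (ind n k p q * Cmod (PU s p)))) by (apply sumR_ge0; intros; rewrite <- Rmult_assoc, ind_sq; pose proof (ind_ge0 n k k0 q); pose proof (Cmod_ge0 (PU s k0)); nra).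
    pose proof (Cmod_ge0 (sumC m (fun t0 => Cmul (PU s t0) (Gk t0 q)))). pose proof (gk_ge0 n k).
    assert (H7 : Cmod (sumC m (fun t0 => Cmul (PU s t0) (Gk t0 q))) ^ 2 <= (gk n k * sumR m (fun p => ind n k p q * (ind n k p q * Cmod (PU s p)))) ^ 2) by (apply pow_incr; auto).
    eapply Rle_trans; [apply H7|]. rewrite Rpow_mult_distr. apply Rmult_le_compat_l. apply pow2_ge_0.
    eapply Rle_trans; [apply H2|]. pose proof (Rmult_le_compat_r _ _ _ H5 H3). eapply Rle_trans; [apply H8|]. rewrite Rmult_1_l. apply Rle_refl. }
  eapply Rle_trans. apply sumR_le. intros q _. apply Hz.
  rewrite <- sumR_scal. rewrite sumR_swap. rewrite Rpow_mult_distr. apply Rmult_le_compat_l. apply pow2_ge_0.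
  rewrite <- (PU_rowsum m r U i s) by auto.  apply sumR_le; intros p Hp.
  apply Rle_trans with (Cmod (PU s p)^2 * sumR m (fun q => ind n k p q)).
  { right. rewrite sumR_scal. apply sumR_ext; intros; ring. }
  pose proof (ind_sum_q n k p m). pose proof (pow2_ge_0 (Cmod (PU s p))). nra.
Qed.

Lemma bndPT s t :
  Cmod (PT m r U V (fun _ => Gmat n k) i s t) <=
  gk n k * (sumR m (fun p => ind n k p t * rho r U i s * rho r U i p)
            + sumR m (fun q => ind n k s q * rho r V i q * rho r V i t)
            + rho r U i s * rho r V i t).
Proof.
  unfold PT. cbv zeta. unfold msub, madd.
  eapply Rle_trans. apply Cmod_sub. pose proof (Cmod_add (mmul m PU Gk s t) (mmul m Gk PV s t)).
  pose proof (bndA s t). pose proof (bndB s t). pose proof (bndC s t). nra.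
Qed.
End Blk.

Lemma avg_prod d (a b : nat -> R) M : (1 <= d)%nat ->
  / INR d * sumR d (fun i => a i ^ 2) <= M -> / INR d * sumR d (fun i => b i ^ 2) <= M ->
  / INR d * sumR d (fun i => a i * b i) <= M.
Proof.
  intros Hd Ha Hb. assert (HD : 0 < INR d) by (apply lt_0_INR; lia).
  assert (Sa : 0 <= sumR d (fun i => a i ^ 2)) by (apply sumR_ge0; intros; apply pow2_ge_0).
  assert (Sb : 0 <= sumR d (fun i => b i ^ 2)) by (apply sumR_ge0; intros; apply pow2_ge_0).
  assert (HM : 0 <= M). { eapply Rle_trans; [|apply Ha]. apply Rmult_le_pos; [apply Rlt_le, Rinv_0_lt_compat; auto|auto]. }
  pose proof (CS d a b) as H.
  assert (Ha' : sumR d (fun i => a i ^ 2) <= INR d * M).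
  { apply (Rmult_le_compat_l (INR d)) in Ha; [|lra]. rewrite <- Rmult_assoc, Rinv_r in Ha by lra. lra. }
  assert (Hb' : sumR d (fun i => b i ^ 2) <= INR d * M).
  { apply (Rmult_le_compat_l (INR d)) in Hb; [|lra]. rewrite <- Rmult_assoc, Rinv_r in Hb by lra. lra. }
  assert (sqrt (sumR d (fun i => a i ^ 2)) * sqrt (sumR d (fun i => b i ^ 2)) <= INR d * M).
  { rewrite <- sqrt_mult by auto. rewrite <- (sqrt_pow2 (INR d * M)) by nra. apply sqrt_le_1_alt.
    replace ((INR d * M) ^ 2) with ((INR d * M) * (INR d * M)) by ring. apply Rmult_le_compat; auto. }
  apply (Rmult_le_reg_l (INR d)); auto. rewrite <- Rmult_assoc, Rinv_r by lra. lra.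
Qed.

Lemma sum_ind_hw n a : sumR (hsize n) (fun s => sumR (hsize n) (fun t => ind n a s t)) = hw n a.
Proof.
  unfold hw. apply sumR_ext; intros s Hs. apply sumR_ext; intros t Ht. unfold ind.
  apply Nat.ltb_lt in Hs, Ht. rewrite Hs, Ht. reflexivity.
Qed.

Lemma hw_ge0 n a : 0 <= hw n a.
Proof. unfold hw. apply sumR_ge0; intros; apply sumR_ge0; intros. destruct (Nat.eqb _ _); lra. Qed.

Lemma hw_gk n a : hw n a * gk n a = sqrt (hw n a).
Proof.
  unfold gk. pose proof (hw_ge0 n a). destruct (Req_dec (hw n a) 0) as [E|E].
  - rewrite E, sqrt_0. ring.
  - assert (0 < sqrt (hw n a)) by (apply sqrt_lt_R0; lra).
    rewrite <- (sqrt_sqrt (hw n a)) at 1 by lra. field. lra.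
Qed.

Definition incoh d n r (U : Blocks) M :=
  forall j, (j < hsize n)%nat -> / INR d * sumR d (fun i => sumR r (fun t => Cmod (U i j t) ^ 2)) <= M.
Definition orthon d n r (U : Blocks) :=
  forall i u u', (i < d)%nat -> (u < r)%nat -> (u' < r)%nat -> mmul (hsize n) (ctrans (U i)) (U i) u u' = idmat u u'.

Lemma avg_rho d n r U W M s p : (1 <= d)%nat -> incoh d n r U M -> incoh d n r W M ->
  (s < hsize n)%nat -> (p < hsize n)%nat ->
  / INR d * sumR d (fun i => rho r U i s * rho r W i p) <= M.
Proof.
  intros Hd HU HW Hs Hp. apply avg_prod; auto.
  - eapply Rle_trans; [|apply (HU s Hs)]. right. f_equal. apply sumR_ext; intros. unfold rho.
    apply pow2_sqrt. apply sumR_ge0; intros; apply pow2_ge_0.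
  - eapply Rle_trans; [|apply (HW p Hp)]. right. f_equal. apply sumR_ext; intros. unfold rho.
    apply pow2_sqrt. apply sumR_ge0; intros; apply pow2_ge_0.
Qed.

Lemma binner_bound d n f g A B :
  Cmod (binner d n (bcmul f A) (bcmul g B)) <=
  sumR d (fun i => sumR (hsize n) (fun s => sumR (hsize n) (fun t =>
     Cmod (f i) * Cmod (g i) * (Cmod (A i s t) * Cmod (B i s t))))).
Proof.
  unfold binner, bcmul, cmat.
  eapply Rle_trans. apply Cmod_sumC. apply sumR_le; intros i Hi.
  eapply Rle_trans. apply Cmod_sumC. apply sumR_le; intros s Hs.
  eapply Rle_trans. apply Cmod_sumC. apply sumR_le; intros t Ht.
  rewrite Cmod_mul, Cmod_conj, !Cmod_mul. right; ring.
Qed.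

Definition Qf n r (U V : Blocks) k i s t :=
  sumR (hsize n) (fun p => ind n k p t * rho r U i s * rho r U i p)
  + sumR (hsize n) (fun q => ind n k s q * rho r V i q * rho r V i t)
  + rho r U i s * rho r V i t.

Lemma incoh_M d n r U M s : (1 <= d)%nat -> incoh d n r U M -> (s < hsize n)%nat -> 0 <= M.
Proof.
  intros Hd H Hs. eapply Rle_trans; [|apply (H s Hs)]. apply Rmult_le_pos.
  apply Rlt_le, Rinv_0_lt_compat, lt_0_INR; lia.
  apply sumR_ge0; intros; apply sumR_ge0; intros; apply pow2_ge_0.
Qed.

Lemma avg_ind d m (w : nat -> R) (x : nat -> nat -> R) M :
  (forall p, (p < m)%nat -> 0 <= w p) -> sumR m w <= 1 -> 0 <= M ->
  (forall p, (p < m)%nat -> / INR d * sumR d (fun i => x i p) <= M) ->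
  / INR d * sumR m (fun p => sumR d (fun i => w p * x i p)) <= M.
Proof.
  intros Hw Hs HM Hx. rewrite sumR_scal.
  apply Rle_trans with (sumR m (fun p => w p * M)).
  - apply sumR_le; intros p Hp. rewrite <- sumR_scal.
    replace (/ INR d * (w p * sumR d (fun i => x i p))) with (w p * (/ INR d * sumR d (fun i => x i p))) by ring.
    apply Rmult_le_compat_l; auto.
  - rewrite (sumR_ext m _ (fun p => M * w p)) by (intros; ring). rewrite <- sumR_scal. nra.
Qed.

Lemma avgQ d n r U V M k s t : (1 <= d)%nat -> incoh d n r U M -> incoh d n r V M ->
  (s < hsize n)%nat -> (t < hsize n)%nat ->
  / INR d * sumR d (fun i => Qf n r U V k i s t) <= 3 * M.
Proof.
  intros Hd HU HV Hs Ht. pose proof (incoh_M d n r U M s Hd HU Hs) as HM. 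
  replace (sumR d (fun i => Qf n r U V k i s t)) with
    (sumR (hsize n) (fun p => sumR d (fun i => ind n k p t * rho r U i s * rho r U i p))
     + sumR (hsize n) (fun q => sumR d (fun i => ind n k s q * rho r V i q * rho r V i t))
     + sumR d (fun i => rho r U i s * rho r V i t)).
  2:{ rewrite <- !(sumR_swap d (hsize n)). rewrite <- (sumR_add d), <- (sumR_add d). apply sumR_ext; intros. unfold Qf. ring. }
  rewrite !Rmult_plus_distr_l.
  assert (A1 : / INR d * sumR (hsize n) (fun p => sumR d (fun i => ind n k p t * rho r U i s * rho r U i p)) <= M).
  { rewrite (sumR_ext (hsize n) _ (fun p => sumR d (fun i => ind n k p t * (rho r U i s * rho r U i p)))) by (intros; apply sumR_ext; intros; ring).
    apply (avg_ind d (hsize n) (fun p => ind n k p t) (fun i p => rho r U i s * rho r U i p)); auto. intros; apply (ind_ge0 n k). apply (ind_sum_p n k t). intros p Hp. apply (avg_rho d n); auto. }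
  assert (A2 : / INR d * sumR (hsize n) (fun q => sumR d (fun i => ind n k s q * rho r V i q * rho r V i t)) <= M).
  { rewrite (sumR_ext (hsize n) _ (fun q => sumR d (fun i => ind n k s q * (rho r V i q * rho r V i t)))) by (intros; apply sumR_ext; intros; ring).
    apply (avg_ind d (hsize n) (fun q => ind n k s q) (fun i q => rho r V i q * rho r V i t)); auto. intros; apply (ind_ge0 n k). apply (ind_sum_q n k s). intros q Hq. apply (avg_rho d n); auto. }
  assert (A3 : / INR d * sumR d (fun i => rho r U i s * rho r V i t) <= M) by (apply (avg_rho d n); auto).
  lra.
Qed.

Lemma c_bound d n r U V M l a j k : (1 <= d)%nat -> (l < d)%nat -> (a < n)%nat -> (j < d)%nat -> (k < n)%nat ->
  orthon d n r U -> orthon d n r V -> incoh d n r U M -> incoh d n r V M ->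
  Cmod (Phi d n r U V (GhatE d n l a) (Eunit j k)) <= 3 * M * gk n k * sqrt (hw n a).
Proof.
  intros Hd Hl Ha Hj Hk HoU HoV HiU HiV.
  assert (HD : 0 < INR d) by (apply lt_0_INR; lia).
  assert (Hsq : / sqrt (INR d) * / sqrt (INR d) = / INR d).
  { rewrite <- Rinv_mult. rewrite sqrt_sqrt; lra. }
  unfold Phi. change (Ghat d n (Eunit j k)) with (GhatE d n j k).
  rewrite (GhatE_eq d n j k), (GhatE_eq d n l a) by auto. rewrite PT_scale.
  eapply Rle_trans. apply binner_bound.
  apply Rle_trans with (sumR d (fun i => sumR (hsize n) (fun s => sumR (hsize n) (fun t =>
      / INR d * (ind n a s t * gk n a * gk n k) * Qf n r U V k i s t)))).
  { apply sumR_le; intros i Hi. apply sumR_le; intros s Hs. apply sumR_le; intros t Ht.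
    rewrite !Cmod_Fdft by auto. rewrite Hsq. rewrite CmodG.
    pose proof (bndPT n r U V i k (fun u u' Hu Hu' => HoU i u u' Hi Hu Hu') (fun u u' Hu Hu' => HoV i u u' Hi Hu Hu') s t) as H.
    fold (Qf n r U V k i s t) in H.
    pose proof (ind_ge0 n a s t). pose proof (gk_ge0 n a). pose proof (gk_ge0 n k).
    assert (0 <= / INR d) by (apply Rlt_le, Rinv_0_lt_compat; auto).
    set (T := Cmod (PT (hsize n) r U V (fun _ : nat => Gmat n k) i s t)) in *.
    replace (/ INR d * (T * (ind n a s t * gk n a))) with ((/ INR d * (ind n a s t * gk n a)) * T) by ring.
    replace (/ INR d * (ind n a s t * gk n a * gk n k) * Qf n r U V k i s t) with ((/ INR d * (ind n a s t * gk n a)) * (gk n k * Qf n r U V k i s t)) by ring.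
    apply Rmult_le_compat_l; auto. apply Rmult_le_pos; auto. apply Rmult_le_pos; auto. }
  apply Rle_trans with (sumR (hsize n) (fun s => sumR (hsize n) (fun t =>
      ind n a s t * gk n a * gk n k * (/ INR d * sumR d (fun i => Qf n r U V k i s t))))).
  { right. rewrite (sumR_swap d (hsize n)). apply sumR_ext; intros s Hs.
    rewrite (sumR_swap d (hsize n)). apply sumR_ext; intros t Ht.
    rewrite !sumR_scal. apply sumR_ext; intros. ring. }
  apply Rle_trans with (sumR (hsize n) (fun s => sumR (hsize n) (fun t => (3 * M * gk n a * gk n k) * ind n a s t))).
  { apply sumR_le; intros s Hs. apply sumR_le; intros t Ht.
    pose proof (avgQ d n r U V M k s t Hd HiU HiV Hs Ht).
    pose proof (ind_ge0 n a s t). pose proof (gk_ge0 n a). pose proof (gk_ge0 n k).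
    replace (3 * M * gk n a * gk n k * ind n a s t) with (ind n a s t * gk n a * gk n k * (3 * M)) by ring.
    apply Rmult_le_compat_l; auto. apply Rmult_le_pos; auto. apply Rmult_le_pos; auto. }
  right. rewrite (sumR_ext (hsize n) _ (fun s => (3 * M * gk n a * gk n k) * sumR (hsize n) (fun t => ind n a s t))).
  2:{ intros. rewrite sumR_scal. reflexivity. }
  rewrite <- sumR_scal. rewrite sum_ind_hw.
  rewrite <- hw_gk. ring.
Qed.

Definition EL p (L : list (list bool)) (f : list bool -> R) : R :=
  fold_right (fun (om : list bool) (acc : R) => bern_weight p om * f om + acc) 0 L.

Lemma EL_app p L1 L2 f : EL p (L1 ++ L2) f = EL p L1 f + EL p L2 f.
Proof. induction L1; simpl. ring. unfold EL in *. simpl. rewrite IHL1. ring. Qed.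

Lemma EL_map p L b f : EL p (map (cons b) L) f = (if b then p else 1 - p) * EL p L (fun om => f (b :: om)).
Proof. induction L; unfold EL in *; simpl. ring. rewrite IHL. ring. Qed.

Lemma bern_step N p f : bern_expect (S N) p f =
  p * bern_expect N p (fun om => f (true :: om)) + (1 - p) * bern_expect N p (fun om => f (false :: om)).
Proof.
  unfold bern_expect. change (fold_right _ 0 (allbits (S N))) with (EL p (allbits (S N)) f).
  simpl. rewrite EL_app, !EL_map. reflexivity.
Qed.

Lemma E0 p f : bern_expect 0 p f = f nil.
Proof. unfold bern_expect; simpl. ring. Qed.

Lemma E_lin N p a b f g : bern_expect N p (fun om => a * f om + b * g om) = a * bern_expect N p f + b * bern_expect N p g.
Proof. revert f g. induction N; intros f g. rewrite !E0. reflexivity. rewrite !bern_step. rewrite IHN, IHN. ring. Qed.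

Lemma E_const N p c : bern_expect N p (fun _ => c) = c.
Proof. induction N. rewrite E0; reflexivity. rewrite bern_step, IHN. ring. Qed.

Lemma E_mono N p f g : 0 <= p <= 1 -> (forall om, f om <= g om) -> bern_expect N p f <= bern_expect N p g.
Proof. intros Hp. revert f g. induction N; intros f g H. rewrite !E0; auto.
  rewrite !bern_step. pose proof (IHN _ _ (fun om => H (true :: om))). pose proof (IHN _ _ (fun om => H (false :: om))). nra. Qed.

Lemma E_ext N p f g : (forall om, f om = g om) -> bern_expect N p f = bern_expect N p g.
Proof. intros H. f_equal. extensionality om. auto. Qed.

Lemma E_scal N p c f : bern_expect N p (fun om => c * f om) = c * bern_expect N p f.
Proof. rewrite (E_ext N p _ (fun om => c * f om + 0 * f om)) by (intros; ring). rewrite E_lin. ring. Qed.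

Lemma E_add N p f g : bern_expect N p (fun om => f om + g om) = bern_expect N p f + bern_expect N p g.
Proof. rewrite (E_ext N p _ (fun om => 1 * f om + 1 * g om)) by (intros; ring). rewrite E_lin. ring. Qed.

Lemma E_sumR N p K (f : nat -> list bool -> R) :
  bern_expect N p (fun om => sumR K (fun x => f x om)) = sumR K (fun x => bern_expect N p (f x)).
Proof. induction K; simpl. apply E_const. rewrite E_add, IHK. reflexivity. Qed.

Fixpoint prodF (N : nat) (g : nat -> R) : R :=
  match N with O => 1 | S k => g O * prodF k (fun m => g (S m)) end.

Lemma exp_sumR N f : exp (sumR N f) = prodF N (fun m => exp (f m)).
Proof. revert f. induction N; intros f. simpl. apply exp_0.
  rewrite sumR_first, exp_plus, IHN. reflexivity. Qed.

Lemma prodF_le N a b : (forall m, (m < N)%nat -> 0 <= a m <= b m) -> prodF N a <= prodF N b.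
Proof. revert a b. induction N; intros a b H; simpl. lra.
  assert (0 <= prodF N (fun m => a (S m))).
  { clear IHN. revert a b H. induction N; intros a b H; simpl. lra. pose proof (H 1%nat ltac:(lia)).
    pose proof (IHN (fun m => a (S m)) (fun m => b (S m)) ltac:(intros; apply H; lia)). simpl in H1. nra. }
  pose proof (IHN (fun m => a (S m)) (fun m => b (S m)) ltac:(intros; apply H; lia)). pose proof (H O ltac:(lia)). nra. Qed.

Lemma E_prod N p (g : nat -> bool -> R) :
  bern_expect N p (fun om => prodF N (fun m => g m (nth m om false))) =
  prodF N (fun m => p * g m true + (1 - p) * g m false).
Proof. revert g. induction N; intros g. rewrite E0. reflexivity.
  rewrite bern_step. simpl.
  rewrite (E_scal N p (g O true) (fun om => prodF N (fun m => g (S m) (nth m om false)))).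
  rewrite (E_scal N p (g O false) (fun om => prodF N (fun m => g (S m) (nth m om false)))).
  rewrite (IHN (fun m => g (S m))). ring. Qed.

Lemma exp_up x : x <= 1/2 -> exp x <= 1 + x + 2 * x ^ 2.
Proof.
  intros H. pose proof (exp_ineq1_le (- x)). rewrite exp_Ropp in H0.
  pose proof (exp_pos x). assert (0 < 1 - x) by lra.
  assert (1 <= (1 + x + 2 * x^2) * (1 - x)) by nra.
  apply (Rmult_le_reg_r (/ exp x)). apply Rinv_0_lt_compat; auto.
  rewrite Rinv_r by lra. apply Rle_trans with ((1 + x + 2 * x ^ 2) * (1 - x)); auto.
  apply Rmult_le_compat_l; [nra|]. lra.
Qed.

Definition dl (m : nat) (om : list bool) : R := if nth m om false then 1 else 0.

Lemma mgf N p z B lam : 0 < p <= 1 -> 0 <= lam -> (forall m, (m < N)%nat -> Rabs (z m) <= B) -> lam * (B / p) <= 1/2 ->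
  bern_expect N p (fun om => exp (lam * sumR N (fun m => (dl m om / p - 1) * z m))) <=
  exp (2 * lam ^ 2 * sumR N (fun m => z m ^ 2) / p).
Proof.
  intros Hp Hl Hz Hb.
  rewrite (E_ext N p _ (fun om => prodF N (fun m => (fun (m : nat) (b : bool) => exp (lam * (((if b then 1 else 0) / p - 1) * z m))) m (nth m om false)))).
  2:{ intros om. rewrite sumR_scal, exp_sumR. reflexivity. }
  rewrite (E_prod N p (fun (m : nat) (b : bool) => exp (lam * (((if b then 1 else 0) / p - 1) * z m)))). cbv beta.
  replace (2 * lam ^ 2 * sumR N (fun m => z m ^ 2) / p) with (sumR N (fun m => 2 * lam^2 * z m ^2 / p)).
  2:{ rewrite (sumR_ext N _ (fun m => (2 * lam^2 / p) * z m ^ 2)) by (intros; unfold Rdiv; ring). rewrite <- sumR_scal. unfold Rdiv; ring. }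
  rewrite exp_sumR. apply prodF_le. intros m Hm. split.
  - pose proof (exp_pos (lam * ((1 / p - 1) * z m))). pose proof (exp_pos (lam * ((0 / p - 1) * z m))). nra.
  - set (y := lam * z m). pose proof (Hz m Hm).
    assert (Hy : Rabs y <= 1/2).
    { unfold y. rewrite Rabs_mult, (Rabs_right lam) by lra.
      apply Rle_trans with (lam * (B / p)); auto. apply Rmult_le_compat_l; auto.
      apply Rle_trans with B; auto. unfold Rdiv. rewrite <- (Rmult_1_r B) at 1. assert (0 <= B) by (pose proof (Rabs_pos (z m)); lra).
      apply Rmult_le_compat_l; auto. rewrite <- Rinv_1. apply Rinv_le_contravar; lra. }
    assert (Hy2 : Rabs y / p <= 1/2).
    { unfold y. rewrite Rabs_mult, (Rabs_right lam) by lra. unfold Rdiv. rewrite Rmult_assoc.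
      apply Rle_trans with (lam * (B / p)); auto. apply Rmult_le_compat_l; auto.
      unfold Rdiv. apply Rmult_le_compat_r; auto. left; apply Rinv_0_lt_compat; lra. }
    replace (lam * ((1 / p - 1) * z m)) with (y * (1 - p) / p) by (unfold y; field; lra).
    replace (lam * ((0 / p - 1) * z m)) with (- y) by (unfold y; field; lra).
    replace (2 * lam ^ 2 * z m ^ 2 / p) with (2 * y ^ 2 / p) by (unfold y; field; lra).
    assert (E1 : exp (y * (1 - p) / p) <= 1 + y * (1 - p) / p + 2 * (y * (1 - p) / p) ^ 2).
    { apply exp_up. apply Rle_trans with (Rabs y / p); [|auto].
      apply Rle_trans with (Rabs (y * (1 - p) / p)). apply RRle_abs.
      unfold Rdiv. rewrite !Rabs_mult. rewrite (Rabs_right (1 - p)) by lra. rewrite (Rabs_right (/ p)) by (left; apply Rinv_0_lt_compat; lra).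
      pose proof (Rabs_pos y). assert (0 < / p) by (apply Rinv_0_lt_compat; lra). assert (0 <= Rabs y * / p) by (apply Rmult_le_pos; lra). nra. }
    assert (E2 : exp (- y) <= 1 + - y + 2 * (- y) ^ 2).
    { apply exp_up. pose proof (Rabs_Ropp y). pose proof (RRle_abs (- y)). lra. }
    pose proof (exp_ineq1_le (2 * y ^ 2 / p)).
    assert (K : p * (1 + y * (1 - p) / p + 2 * (y * (1 - p) / p) ^ 2) + (1 - p) * (1 + - y + 2 * (- y) ^ 2)
                = 1 + 2 * y ^ 2 * (1 - p) / p) by (field; lra).
    assert (K2 : 2 * y ^ 2 * (1 - p) / p <= 2 * y ^ 2 / p).
    { unfold Rdiv. assert (0 < / p) by (apply Rinv_0_lt_compat; lra). pose proof (pow2_ge_0 y). nra. }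
    nra.
Qed.

Lemma exp_mono a b : a <= b -> exp a <= exp b.
Proof. intros [H|H]. left; apply exp_increasing; auto. right; subst; auto. Qed.

Definition Ssum N p z om := sumR N (fun m => (dl m om / p - 1) * z m).

Lemma markov N p z B lam tau : 0 < p <= 1 -> 0 <= lam -> (forall m, (m < N)%nat -> Rabs (z m) <= B) -> lam * (B / p) <= 1/2 ->
  bern_expect N p (fun om => if Rle_dec (Ssum N p z om) tau then 0 else 1) <=
  exp (- lam * tau + 2 * lam ^ 2 * sumR N (fun m => z m ^ 2) / p).
Proof.
  intros Hp Hl Hz Hb.
  apply Rle_trans with (bern_expect N p (fun om => exp (- lam * tau) * exp (lam * Ssum N p z om))).
  - apply E_mono; [lra|]. intros om. destruct (Rle_dec (Ssum N p z om) tau).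
    + pose proof (exp_pos (- lam * tau)). pose proof (exp_pos (lam * Ssum N p z om)). nra.
    + rewrite <- exp_plus. pose proof (exp_ineq1_le (- lam * tau + lam * Ssum N p z om)). nra.
  - rewrite E_scal. rewrite Rplus_comm, exp_plus, Rmult_comm. apply Rmult_le_compat_r. left; apply exp_pos.
    apply mgf with B; auto.
Qed.

Lemma tail N p z B s2 L tau : 0 < p <= 1 -> 0 <= B -> (forall m, (m < N)%nat -> Rabs (z m) <= B) ->
  sumR N (fun m => z m ^ 2) <= s2 -> 0 <= L -> 0 <= tau -> 8 * (B / p) * L <= tau -> 16 * L * (s2 / p) <= tau ^ 2 ->
  bern_expect N p (fun om => if Rle_dec (Ssum N p z om) tau then 0 else 1) <= exp (- 2 * L).
Proof.
  intros Hp HB Hz Hs HL Ht H1 H2.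
  assert (HS0 : 0 <= sumR N (fun m => z m ^ 2)) by (apply sumR_ge0; intros; apply pow2_ge_0).
  assert (Hip : 0 < / p) by (apply Rinv_0_lt_compat; lra).
  set (b := B / p) in *. set (v := s2 / p) in *.
  assert (Hb0 : 0 <= b) by (unfold b, Rdiv; apply Rmult_le_pos; lra).
  assert (Hv0 : 0 <= v) by (unfold v, Rdiv; apply Rmult_le_pos; lra).
  assert (HSv : sumR N (fun m => z m ^ 2) / p <= v) by (unfold v, Rdiv; apply Rmult_le_compat_r; lra).
  destruct (Req_dec v 0) as [Hv|Hv].
  -
    assert (Hz0 : forall m, (m < N)%nat -> z m = 0).
    { intros m Hm. assert (z m ^ 2 <= 0).
      { apply Rle_trans with (sumR N (fun m => z m ^ 2)). apply (sumR_single_le N (fun m => z m ^ 2)); auto. intros; apply pow2_ge_0.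
        assert (HH : sumR N (fun m => z m ^ 2) / p <= 0) by lra.
        apply (Rmult_le_reg_r (/ p)); auto. unfold Rdiv in HH. lra. }
      pose proof (pow2_ge_0 (z m)). nra. }
    apply Rle_trans with (bern_expect N p (fun _ => 0)).
    + apply E_mono; [lra|]. intros om. destruct (Rle_dec (Ssum N p z om) tau) as [|n]; [lra|].
      exfalso. apply n. unfold Ssum. rewrite (sumR_ext N _ (fun _ => 0)) by (intros; rewrite Hz0; auto; ring). rewrite sumR_0. auto.
    + rewrite E_const. left; apply exp_pos.
  - assert (Hvp : 0 < v) by lra.
    destruct (Rle_dec (tau * b) (2 * v)) as [Hc|Hc].
    + set (lam := tau / (4 * v)).
      assert (Hl : 0 <= lam) by (unfold lam, Rdiv; apply Rmult_le_pos; [lra|left; apply Rinv_0_lt_compat; lra]).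
      eapply Rle_trans. apply (markov N p z B lam tau); auto.
      { fold b. unfold lam. apply (Rmult_le_reg_r (4 * v)); [lra|]. replace (tau / (4 * v) * b * (4 * v)) with (tau * b) by (field; lra). lra. }
      apply exp_mono.
      apply Rle_trans with (- lam * tau + 2 * lam ^ 2 * v).
      { pose proof (pow2_ge_0 lam). unfold Rdiv at 1. 
        assert (2 * lam ^ 2 * (sumR N (fun m => z m ^ 2) * / p) <= 2 * lam ^ 2 * v) by (apply Rmult_le_compat_l; [nra|auto]). lra. }
      unfold lam. replace (- (tau / (4 * v)) * tau + 2 * (tau / (4 * v)) ^ 2 * v) with (- (tau ^ 2 / (8 * v))) by (field; lra).
      assert (2 * L <= tau ^ 2 / (8 * v)); [|lra].
      apply (Rmult_le_reg_r (8 * v)); [lra|].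
      replace (tau ^ 2 / (8 * v) * (8 * v)) with (tau ^ 2) by (field; lra). lra.
    + assert (Hbp : 0 < b) by (destruct (Req_dec b 0); [rewrite H in Hc; lra|lra]).
      set (lam := / (2 * b)).
      assert (Hl : 0 <= lam) by (unfold lam; left; apply Rinv_0_lt_compat; lra).
      eapply Rle_trans. apply (markov N p z B lam tau); auto.
      { fold b. unfold lam. right. field. lra. }
      apply exp_mono.
      apply Rle_trans with (- lam * tau + 2 * lam ^ 2 * v).
      { pose proof (pow2_ge_0 lam). unfold Rdiv at 1.
        assert (2 * lam ^ 2 * (sumR N (fun m => z m ^ 2) * / p) <= 2 * lam ^ 2 * v) by (apply Rmult_le_compat_l; [nra|auto]). lra. }
      unfold lam. replace (- / (2 * b) * tau + 2 * (/ (2 * b)) ^ 2 * v) with ((- tau * b + v) / (2 * b ^ 2)) by (field; lra).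
      apply (Rmult_le_reg_r (2 * b ^ 2)); [nra|].
      replace ((- tau * b + v) / (2 * b ^ 2) * (2 * b ^ 2)) with (- tau * b + v) by (field; lra).
      unfold b in *. nra.
Qed.

Lemma maxR_le n f T : (forall k, (k < n)%nat -> f k <= T) -> 0 <= T -> maxR n f <= T.
Proof. induction n; intros H HT; simpl. auto. apply Rmax_lub. apply IHn; auto. apply H; lia. Qed.
Lemma maxR_ge n f k : (k < n)%nat -> f k <= maxR n f.
Proof. induction n; intros Hk; simpl. lia. destruct (Nat.eq_dec k n). subst. apply Rmax_r.
  eapply Rle_trans; [apply IHn; lia|apply Rmax_l]. Qed.
Lemma maxR_ge0 n f : 0 <= maxR n f.
Proof. induction n; simpl. lra. eapply Rle_trans; [apply IHn|apply Rmax_l]. Qed.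
Lemma sumR_const n c : sumR n (fun _ => c) = INR n * c.
Proof. induction n; simpl. ring. rewrite IHn. destruct n; simpl; ring. Qed.

Lemma hw_pos n a : Nat.Odd n -> (a < n)%nat -> 1 <= hw n a.
Proof.
  intros [h Hh] Ha. assert (Hs : hsize n = S h). { unfold hsize. rewrite Hh. replace (2 * h + 1 + 1)%nat with (S h * 2)%nat by lia. apply Nat.div_mul. lia. }
  unfold hw. rewrite Hs. set (s := Nat.min a h). set (t := (a - s)%nat).
  assert (s < S h)%nat by (unfold s; lia). assert (t < S h)%nat by (unfold t, s; lia).
  eapply Rle_trans; [|apply (sumR_single_le _ _ s)]; auto.
  - eapply Rle_trans; [|apply (sumR_single_le _ _ t)]; auto.
    + cbv beta. replace (s + t)%nat with a by (unfold t, s; lia). rewrite Nat.eqb_refl. lra.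
    + intros; destruct (Nat.eqb _ _); lra.
  - intros; apply sumR_ge0; intros; destruct (Nat.eqb _ _); lra.
Qed.

Lemma Cre_CRmul x w : Cre (Cmul (CR x) w) = x * Cre w.
Proof. simpl. ring. Qed.
Lemma Cim_CRmul x w : Cim (Cmul (CR x) w) = x * Cim w.
Proof. simpl. ring. Qed.

Lemma flat_eq d n (g : nat -> nat -> R) : (1 <= n)%nat ->
  sumR d (fun j => sumR n (fun k => g j k)) = sumR (d * n) (fun m => g (m / n)%nat (m mod n)%nat).
Proof.
  intros Hn. rewrite <- sumR_flat. apply sumR_ext; intros j Hj. apply sumR_ext; intros k Hk.
  f_equal. - rewrite Nat.div_add_l by lia. rewrite Nat.div_small by lia. lia.
  - rewrite Nat.add_comm, Nat.Div0.mod_add. symmetry. apply Nat.mod_small; lia.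
Qed.

Section Entry.
Variables (d n r : nat) (U V Z : Blocks) (M p : R) (l a : nat).
Hypotheses (Hd : (1 <= d)%nat) (Hn : (1 <= n)%nat) (Hodd : Nat.Odd n) (Hl : (l < d)%nat) (Ha : (a < n)%nat)
  (HoU : orthon d n r U) (HoV : orthon d n r V) (HiU : incoh d n r U M) (HiV : incoh d n r V M) (Hp : 0 < p <= 1).

Definition yy j k := Cmul (CR (/ sqrt (INR d * hw n a))) (Cmul (Gstar d n Z j k) (Phi d n r U V (GhatE d n l a) (Eunit j k))).
Definition ee j k := / sqrt (INR d * hw n k) * Cmod (Gstar d n Z j k).

Lemma yy_bound j k : (j < d)%nat -> (k < n)%nat -> Cmod (yy j k) <= 3 * M * ee j k.
Proof.
  intros Hj Hk. unfold yy, ee. rewrite !Cmod_mul, Cmod_CR.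
  assert (HD : 0 < INR d) by (apply lt_0_INR; lia).
  pose proof (hw_pos n a Hodd Ha). pose proof (hw_pos n k Hodd Hk).
  rewrite Rabs_right by (left; apply Rinv_0_lt_compat, sqrt_lt_R0; nra).
  pose proof (c_bound d n r U V M l a j k Hd Hl Ha Hj Hk HoU HoV HiU HiV) as Hc.
  pose proof (Cmod_ge0 (Gstar d n Z j k)).
  assert (Hsa : 0 < / sqrt (INR d * hw n a)) by (apply Rinv_0_lt_compat, sqrt_lt_R0; nra).
  apply Rle_trans with (/ sqrt (INR d * hw n a) * (Cmod (Gstar d n Z j k) * (3 * M * gk n k * sqrt (hw n a)))).
  { apply Rmult_le_compat_l; [lra|]. apply Rmult_le_compat_l; auto. }
  right. unfold gk. rewrite !sqrt_mult by lra.
  assert (0 < sqrt (INR d)) by (apply sqrt_lt_R0; lra).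
  assert (0 < sqrt (hw n a)) by (apply sqrt_lt_R0; lra).
  assert (0 < sqrt (hw n k)) by (apply sqrt_lt_R0; lra).
  field. lra.
Qed.

Definition Sp om := sumC d (fun j => sumC n (fun k => Cmul (CR (delta n om j k / p - 1)) (yy j k))).

Lemma entry_eq om :
  / sqrt (INR d * hw n a) * Cmod (binner d n (lemma_op d n r U V p om Z) (GhatE d n l a)) = Cmod (Sp om).
Proof.
  assert (HD : 0 < INR d) by (apply lt_0_INR; lia). pose proof (hw_pos n a Hodd Ha).
  assert (Hs : 0 <= / sqrt (INR d * hw n a)) by (left; apply Rinv_0_lt_compat, sqrt_lt_R0; nra).
  transitivity (Cmod (Cmul (CR (/ sqrt (INR d * hw n a))) (binner d n (lemma_op d n r U V p om Z) (GhatE d n l a)))).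
  { rewrite Cmod_mul, Cmod_CR, Rabs_right by lra. reflexivity. }
  f_equal. rewrite op_expand by lra. unfold Sp, yy.
  rewrite sumC_mull. apply sumC_ext; intros j Hj. rewrite sumC_mull. apply sumC_ext; intros k Hk. ring.
Qed.

Definition zR m := Cre (yy (m / n)%nat (m mod n)%nat).
Definition zI m := Cim (yy (m / n)%nat (m mod n)%nat).

Lemma Sp_re om : Cre (Sp om) = Ssum (d * n) p zR om.
Proof.
  unfold Sp, Ssum, zR. rewrite Cre_sumC. rewrite (sumR_ext d _ (fun j => sumR n (fun k => (delta n om j k / p - 1) * Cre (yy j k)))).
  2:{ intros. rewrite Cre_sumC. apply sumR_ext; intros. apply Cre_CRmul. }
  rewrite <- sumR_flat. apply sumR_ext; intros j Hj. apply sumR_ext; intros k Hk.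
  unfold delta, dl. f_equal. f_equal. f_equal.
  - rewrite Nat.div_add_l by lia. rewrite Nat.div_small by lia. lia.
  - rewrite Nat.add_comm, Nat.Div0.mod_add. symmetry. apply Nat.mod_small; lia.
Qed.
Lemma Sp_im om : Cim (Sp om) = Ssum (d * n) p zI om.
Proof.
  unfold Sp, Ssum, zI. rewrite Cim_sumC. rewrite (sumR_ext d _ (fun j => sumR n (fun k => (delta n om j k / p - 1) * Cim (yy j k)))).
  2:{ intros. rewrite Cim_sumC. apply sumR_ext; intros. apply Cim_CRmul. }
  rewrite <- sumR_flat. apply sumR_ext; intros j Hj. apply sumR_ext; intros k Hk.
  unfold delta, dl. f_equal. f_equal. f_equal.
  - rewrite Nat.div_add_l by lia. rewrite Nat.div_small by lia. lia.
  - rewrite Nat.add_comm, Nat.Div0.mod_add. symmetry. apply Nat.mod_small; lia.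
Qed.
Lemma Ssum_opp N z om : Ssum N p (fun m => - z m) om = - Ssum N p z om.
Proof. unfold Ssum. rewrite <- sumR_opp. apply sumR_ext; intros; ring. Qed.

Lemma sq_inv_sqrt x : 0 < x -> (/ sqrt x) ^ 2 = / x.
Proof. intros. assert (0 < sqrt x) by (apply sqrt_lt_R0; auto). rewrite <- (pow2_sqrt x) at 2 by lra. field. lra. Qed.

Lemma ee_le_GI j k : (j < d)%nat -> (k < n)%nat -> ee j k <= normGinf d n Z.
Proof.
  intros Hj Hk. unfold normGinf. eapply Rle_trans; [|apply (maxR_ge d _ j Hj)]. cbv beta.
  eapply Rle_trans; [|apply (maxR_ge n _ k Hk)]. cbv beta. right. reflexivity.
Qed.

Lemma sum_ee2 : sumR d (fun j => sumR n (fun k => ee j k ^ 2)) = normGF d n Z ^ 2.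
Proof.
  unfold normGF. rewrite pow2_sqrt.
  - apply sumR_ext; intros j Hj. apply sumR_ext; intros k Hk. unfold ee. rewrite Rpow_mult_distr.
    rewrite sq_inv_sqrt. reflexivity. pose proof (hw_pos n k Hodd Hk). assert (0 < INR d) by (apply lt_0_INR; lia). nra.
  - apply sumR_ge0; intros j Hj; apply sumR_ge0; intros k Hk. apply Rmult_le_pos; [|apply pow2_ge_0].
    pose proof (hw_pos n k Hodd Hk). assert (0 < INR d) by (apply lt_0_INR; lia).
    left; apply Rinv_0_lt_compat; nra.
Qed.

Lemma z_bounds (z : nat -> R) : 0 <= M ->
  (forall m, Rabs (z m) <= Cmod (yy (m / n)%nat (m mod n)%nat)) ->
  (forall m, (m < d * n)%nat -> Rabs (z m) <= 3 * M * normGinf d n Z) /\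
  sumR (d * n) (fun m => z m ^ 2) <= 9 * M ^ 2 * normGF d n Z ^ 2.
Proof.
  intros HM Hz. split.
  - intros m Hm. eapply Rle_trans; [apply Hz|].
    assert (Hj : (m / n < d)%nat) by (apply Nat.Div0.div_lt_upper_bound; lia).
    assert (Hk : (m mod n < n)%nat) by (apply Nat.mod_upper_bound; lia).
    eapply Rle_trans. apply yy_bound; auto. apply Rmult_le_compat_l. lra. apply ee_le_GI; auto.
  - rewrite <- sum_ee2. rewrite <- (sumR_flat d n (fun m => z m ^ 2)).
    rewrite sumR_scal. apply sumR_le; intros j Hj. rewrite sumR_scal. apply sumR_le; intros k Hk.
    pose proof (Hz (j * n + k)%nat) as H.
    replace ((j * n + k) / n)%nat with j in H by (rewrite Nat.div_add_l by lia; rewrite Nat.div_small by lia; lia).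
    replace ((j * n + k) mod n)%nat with k in H by (rewrite Nat.add_comm, Nat.Div0.mod_add; symmetry; apply Nat.mod_small; lia).
    pose proof (yy_bound j k Hj Hk). pose proof (Rabs_pos (z (j * n + k)%nat)).
    assert (0 <= ee j k) by (unfold ee; apply Rmult_le_pos; [|apply Cmod_ge0]; pose proof (hw_pos n k Hodd Hk); assert (0 < INR d) by (apply lt_0_INR; lia); left; apply Rinv_0_lt_compat, sqrt_lt_R0; nra).
    assert (Rabs (z (j*n+k)%nat) <= 3 * M * ee j k) by lra.
    assert (z (j*n+k)%nat ^ 2 <= (3 * M * ee j k) ^ 2).
    { rewrite <- (pow2_abs (z _)). apply pow_incr. split; auto. }
    nra.
Qed.

Lemma entry_prob T :
  0 <= M ->
  T = 48 * M * (sqrt (ln (INR (d * n)) / p) * normGF d n Z + ln (INR (d * n)) / p * normGinf d n Z) ->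
  bern_expect (d * n) p (fun om =>
    if Rle_dec (/ sqrt (INR d * hw n a) * Cmod (binner d n (lemma_op d n r U V p om Z) (GhatE d n l a))) T then 0 else 1)
  <= 4 * exp (- 2 * ln (INR (d * n))).
Proof.
  intros HM HT. set (L := ln (INR (d * n))) in *. set (GF := normGF d n Z) in *. set (GI := normGinf d n Z) in *.
  assert (HL : 0 <= L).
  { unfold L. assert (1 <= INR (d * n)) by (apply (le_INR 1); nia). destruct (Req_dec (INR (d * n)) 1) as [E|E].
    - rewrite E, ln_1; lra. - left. rewrite <- ln_1. apply ln_increasing; lra. }
  assert (HGF : 0 <= GF) by apply sqrt_pos. assert (HGI : 0 <= GI) by apply maxR_ge0.
  set (tau := T / 2).
  assert (Hip : 0 < / p) by (apply Rinv_0_lt_compat; lra).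
  assert (HLp : 0 <= L / p) by (unfold Rdiv; apply Rmult_le_pos; lra).
  assert (Hs : sqrt (L / p) ^ 2 = L / p) by (apply pow2_sqrt; auto).
  pose proof (sqrt_pos (L / p)) as Hsp.
  assert (Htau0 : 0 <= tau) by (unfold tau; rewrite HT; assert (0 <= sqrt (L/p) * GF) by nra; assert (0 <= L/p*GI) by nra; nra).
  assert (Ht1 : 8 * (3 * M * GI / p) * L <= tau).
  { unfold tau. rewrite HT. replace (8 * (3 * M * GI / p) * L) with (24 * M * (L / p * GI)) by (field; lra).
    assert (0 <= M * (sqrt (L / p) * GF)) by (apply Rmult_le_pos; nra). nra. }
  assert (Ht2 : 16 * L * (9 * M ^ 2 * GF ^ 2 / p) <= tau ^ 2).
  { assert (X : 24 * M * sqrt (L / p) * GF <= tau).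
    { unfold tau. rewrite HT. assert (0 <= M * (L / p * GI)) by (apply Rmult_le_pos; nra). nra. }
    assert (0 <= 24 * M * sqrt (L / p) * GF) by (repeat apply Rmult_le_pos; lra).
    assert ((24 * M * sqrt (L / p) * GF) ^ 2 <= tau ^ 2) by (apply pow_incr; auto).
    replace ((24 * M * sqrt (L / p) * GF) ^ 2) with (576 * M^2 * GF^2 * (sqrt (L/p))^2) in H0 by ring.
    rewrite Hs in H0. replace (16 * L * (9 * M ^ 2 * GF ^ 2 / p)) with (144 * M^2 * GF^2 * (L / p)) by (field; lra).
    assert (0 <= M^2 * GF^2 * (L/p)) by (apply Rmult_le_pos; [|auto]; nra). nra. }
  assert (HB : 0 <= 3 * M * GI) by nra.
  assert (Tl : forall z, (forall m, Rabs (z m) <= Cmod (yy (m / n)%nat (m mod n)%nat)) ->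
     bern_expect (d * n) p (fun om => if Rle_dec (Ssum (d * n) p z om) tau then 0 else 1) <= exp (- 2 * L)).
  { intros z Hz. destruct (z_bounds z HM Hz) as [Z1 Z2].
    apply (tail (d * n) p z (3 * M * GI) (9 * M ^ 2 * GF ^ 2) L tau); auto. }
  pose proof (Tl zR ltac:(intros; apply Rabs_Cre_le)) as T1.
  pose proof (Tl (fun m => - zR m) ltac:(intros; cbv beta; rewrite Rabs_Ropp; apply Rabs_Cre_le)) as T2.
  pose proof (Tl zI ltac:(intros; apply Rabs_Cim_le)) as T3.
  pose proof (Tl (fun m => - zI m) ltac:(intros; cbv beta; rewrite Rabs_Ropp; apply Rabs_Cim_le)) as T4.
  set (I := fun z om => if Rle_dec (Ssum (d * n) p z om) tau then 0 else 1) in *.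
  apply Rle_trans with (bern_expect (d * n) p (fun om => I zR om + I (fun m => - zR m) om + I zI om + I (fun m => - zI m) om)).
  - apply E_mono; [lra|]. intros om. rewrite entry_eq.
    assert (forall z, 0 <= I z om) by (intros; unfold I; destruct (Rle_dec _ _); lra).
    pose proof (H zR). pose proof (H (fun m => - zR m)). pose proof (H zI). pose proof (H (fun m => - zI m)).
    destruct (Rle_dec (Cmod (Sp om)) T); [lra|].
    unfold I. rewrite !Ssum_opp. rewrite <- Sp_re, <- Sp_im.
    pose proof (Cmod_le_re_im (Sp om)).
    destruct (Rle_dec (Cre (Sp om)) tau), (Rle_dec (- Cre (Sp om)) tau), (Rle_dec (Cim (Sp om)) tau), (Rle_dec (- Cim (Sp om)) tau); try lra.
    exfalso. apply n0. unfold tau in *.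
    assert (Rabs (Cre (Sp om)) <= T / 2) by (apply Rabs_le; lra).
    assert (Rabs (Cim (Sp om)) <= T / 2) by (apply Rabs_le; lra). lra.
  - rewrite !E_add. unfold I. lra.
Qed.
End Entry.

Theorem lemma4p5 :
  exists Cc c1 c2 : R, 0 < Cc /\ 0 < c1 /\ 0 < c2 /\
  forall (d n r : nat) (mu0 p : R) (Znat U Sig V Z : Blocks),
    (1 <= d)%nat -> (1 <= n)%nat -> Nat.Odd n ->
    compact_svd d n r Znat U Sig V ->
    avg_incoherent d n r mu0 U V ->
    0 < p <= 1 ->
    bern_expect (d * n) p
      (fun om =>
         if Rle_dec
              (normGinf d n (lemma_op d n r U V p om Z))
              (Cc * (mu0 * INR r / INR n) *
                 (sqrt (ln (INR (d * n)) / p) * normGF d n Z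
                  + ln (INR (d * n)) / p * normGinf d n Z))
         then 1 else 0)
    >= 1 - c1 * Rpower (INR (d * n)) (- c2).
Proof.
  exists 48, 4, 1. split; [lra|]. split; [lra|]. split; [lra|].
  intros d n r mu0 p Znat U Sig V Z Hd Hn Hodd Hsvd Hinc Hp.
  set (M := mu0 * INR r / INR n).
  assert (HoU : orthon d n r U).
  { intros i u u' Hi Hu Hu'. destruct (Hsvd i Hi) as [_ [H _]]. apply H; auto. }
  assert (HoV : orthon d n r V).
  { intros i u u' Hi Hu Hu'. destruct (Hsvd i Hi) as [_ [_ [H _]]]. apply H; auto. }
  assert (HiU : incoh d n r U M) by (intros j Hj; apply (proj1 Hinc); auto).
  assert (HiV : incoh d n r V M) by (intros j Hj; apply (proj2 Hinc); auto).
  assert (Hh : (0 < hsize n)%nat) by (unfold hsize; apply Nat.div_str_pos; lia).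
  assert (HM : 0 <= M) by (apply (incoh_M d n r U M O); auto).
  set (L := ln (INR (d * n))).
  set (T := 48 * M * (sqrt (L / p) * normGF d n Z + L / p * normGinf d n Z)).
  assert (HL : 0 <= L).
  { unfold L. assert (1 <= INR (d * n)) by (apply (le_INR 1); nia). destruct (Req_dec (INR (d * n)) 1) as [E|E].
    - rewrite E, ln_1; lra. - left. rewrite <- ln_1. apply ln_increasing; lra. }
  assert (HT0 : 0 <= T).
  { unfold T. assert (0 <= L / p) by (unfold Rdiv; apply Rmult_le_pos; [lra|left; apply Rinv_0_lt_compat; lra]).
    pose proof (sqrt_pos (L / p)). assert (0 <= normGF d n Z) by apply sqrt_pos. pose proof (maxR_ge0 d (fun l => maxR n (fun a => / sqrt (INR d * hw n a) * Cmod (binner d n Z (GhatE d n l a))))).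
    fold (normGinf d n Z) in H2.
    assert (0 <= sqrt (L / p) * normGF d n Z) by nra. assert (0 <= L / p * normGinf d n Z) by nra. nra. }
  set (bad := fun l a om => if Rle_dec (/ sqrt (INR d * hw n a) * Cmod (binner d n (lemma_op d n r U V p om Z) (GhatE d n l a))) T then 0 else 1).
  assert (Hbad01 : forall l a om, 0 <= bad l a om <= 1) by (intros; unfold bad; destruct (Rle_dec _ _); lra).
  apply Rle_ge.
  apply Rle_trans with (bern_expect (d * n) p (fun om => 1 * 1 + (-1) * sumR d (fun l => sumR n (fun a => bad l a om)))).
  2:{ apply E_mono; [lra|]. intros om. fold M L T.
      destruct (Rle_dec (normGinf d n (lemma_op d n r U V p om Z)) T) as [Hg|Hg].
      - assert (0 <= sumR d (fun l => sumR n (fun a => bad l a om))) by (apply sumR_ge0; intros; apply sumR_ge0; intros; apply Hbad01). lra.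
      - destruct (Rlt_le_dec (sumR d (fun l => sumR n (fun a => bad l a om))) 1) as [Hs|Hs]; [|lra].
        exfalso. apply Hg. unfold normGinf. apply maxR_le; auto. intros l Hl. apply maxR_le; auto. intros a Ha.
        assert (Hb : bad l a om <= sumR d (fun l => sumR n (fun a => bad l a om))).
        { eapply Rle_trans; [|apply (sumR_single_le d _ l); auto].
          - apply (sumR_single_le n (fun a => bad l a om) a); auto. intros; apply Hbad01.
          - intros; apply sumR_ge0; intros; apply Hbad01. }
        destruct (Rle_dec (/ sqrt (INR d * hw n a) * Cmod (binner d n (lemma_op d n r U V p om Z) (GhatE d n l a))) T) as [Hle|Hgt]; [exact Hle|].
        exfalso. assert (bad l a om = 1) by (unfold bad; destruct (Rle_dec _ _); [contradiction|reflexivity]). lra. }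
  rewrite (E_lin (d * n) p 1 (-1) (fun _ => 1) (fun om => sumR d (fun l => sumR n (fun a => bad l a om)))).
  rewrite E_const, E_sumR.
  rewrite (sumR_ext d _ (fun l => sumR n (fun a => bern_expect (d * n) p (bad l a)))).
  2:{ intros. apply E_sumR. }
  assert (Hsum : sumR d (fun l => sumR n (fun a => bern_expect (d * n) p (bad l a))) <= sumR d (fun l => sumR n (fun a => 4 * exp (- 2 * L)))).
  { apply sumR_le; intros l Hl. apply sumR_le; intros a Ha.
    apply (entry_prob d n r U V Z M p l a Hd Hn Hodd Hl Ha HoU HoV HiU HiV Hp T HM). reflexivity. }
  rewrite !sumR_const in Hsum.
  assert (E : INR d * (INR n * (4 * exp (- 2 * L))) = 4 * Rpower (INR (d * n)) (- 1)).
  { unfold Rpower. fold L.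
    assert (0 < INR (d * n)) by (apply lt_0_INR; nia).
    replace (INR d * (INR n * (4 * exp (- 2 * L)))) with (4 * (INR (d * n) * exp (- 2 * L))) by (rewrite mult_INR; ring).
    rewrite <- (exp_ln (INR (d * n))) at 1 by auto. fold L. rewrite <- exp_plus. f_equal. f_equal. ring. }
  assert (E' : Rpower (INR (d*n)) (- (1)) = Rpower (INR (d*n)) (-1)) by (f_equal; ring). rewrite E'. lra.
Qed.
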